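(* Let $(V,m)$ be a discrete measure space and $(b,c)$ a connected graph over $(V,m)$, and let $\mathcal B^{(N)}=D(Q^{(N)})/D(Q^{(D)})$. Then the map $$P:\mathcal B^{(N)}\to\{u_\infty:u\in D(Q^{(N)})\},\qquad [u]\mapsto u_\infty,$$ is well-defined (i.e. $u_\infty=0$ for all $u\in D(Q^{(D)})$), linear, continuous (with the quotient topology from $\langle\cdot,\cdot\rangle_{Q^{(N)}}$ on $\mathcal B^{(N)}$ and locally uniform convergence on the target) and onto. In particular, for every $f\in D(Q^{(N)})$ there exists $w\in D(Q^{(N)})$ with $(\widetilde L+1)w=0$ and $w_\infty=f_\infty$. Furthermore, if $\widehat V$ is compact, then $P$ is injective.
   Context: $V$ is a finite or countably infinite set and $m:V\to(0,\infty)$; $(V,m)$ is a discrete measure space. $C(V)$ is the set of all functions $V\to\mathbb C$, $C_c(V)$ the finitely supported ones, and $\ell^2(V,m)$ carries $\langle u,v\rangle=\sum_x u(x)\overline{v(x)}m(x)$. A graph over $(V,m)$ is a pair $(b,c)$ with $c:V\to[0,\infty)$, $b:V\times V\to[0,\infty)$, $b(x,x)=0$, $b(x,y)=b(y,x)$, $\sum_y b(x,y)<\infty$. A path from $x$ to $y$ is a finite sequence $x=x_1,\dots,x_n=y$ with $b(x_j,x_{j+1})>0$; the graph is connected if any two vertices are joined by a path. Let $\widetilde F=\{u\in C(V):\sum_y|b(x,y)u(y)|<\infty\ \forall x\}$ and $\widetilde L u(x)=\frac{1}{m(x)}\sum_y b(x,y)(u(x)-u(y))+\frac{c(x)}{m(x)}u(x)$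 for $u\in\widetilde F$. $Q^{(N)}$ is the form on $\ell^2(V,m)$ with domain $D(Q^{(N)})=\{u\in\ell^2(V,m):\frac12\sum_{x,y}b(x,y)|u(x)-u(y)|^2+\sum_x c(x)|u(x)|^2<\infty\}$ and $Q^{(N)}(u,v)=\frac12\sum_{x,y}b(x,y)(u(x)-u(y))\overline{(v(x)-v(y))}+\sum_x c(x)u(x)\overline{v(x)}$; it is closed, $D(Q^{(N)})\subseteq\widetilde F$, and $\langle u,v\rangle_{Q^{(N)}}=Q^{(N)}(u,v)+\langle u,v\rangle$. $Q^{(D)}$ is the closure of the restriction of $Q^{(N)}$ to $C_c(V)$. The length of a path $\gamma=(x_1,\dots,x_n)$ is $L(\gamma)=\sum_{j=1}^{n-1}b(x_j,x_{j+1})^{-1/2}$ and $d(x,y)=\inf\{L(\gamma):\gamma\text{ a path from }x\text{ to }y\}$, a metric on $V$. $\widehat V$ is the metric completion of $(V,d)$ and $V_\infty=\widehat V\setminus V$. Every $u\in D(Q^{(N)})$ satisfies $|u(x)-u(y)|\le Q^{(N)}(u,u)^{1/2}d(x,y)$ and extends uniquely to a Lipschitz function $\widehat u$ on $\widehat V$; $u_\infty$ is the restriction of $\widehat u$ to $V_\infty$ (and $u_\infty:=0$ if $V_\infty=\emptyset$). *)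

(* Defs.v *)
From Stdlib Require Import Reals Lra List ClassicalEpsilon.
Import ListNotations.
Open Scope R_scope.

Definition Cpx : Type := (R * R)%type.
Definition C0 : Cpx := (0, 0).
Definition RtoC (r : R) : Cpx := (r, 0).
Definition Cadd (z w : Cpx) : Cpx := (fst z + fst w, snd z + snd w).
Definition Copp (z : Cpx) : Cpx := (- fst z, - snd z).
Definition Csub (z w : Cpx) : Cpx := Cadd z (Copp w).
Definition Cmul (z w : Cpx) : Cpx :=
  (fst z * fst w - snd z * snd w, fst z * snd w + snd z * fst w).
Definition Cmod2 (z : Cpx) : R := Rsqr (fst z) + Rsqr (snd z).
Definition Cnorm (z : Cpx) : R := sqrt (Cmod2 z).

Definition C_cv (s : nat -> Cpx) (z : Cpx) : Prop :=
  forall eps, eps > 0 -> exists N, forall n, (N <= n)%nat -> Cnorm (Csub (s n) z) < eps.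

Definition fin_sum {T : Type} (f : T -> R) (l : list T) : R :=
  fold_right (fun x acc => f x + acc) 0 l.
Definition fin_sumC {T : Type} (f : T -> Cpx) (l : list T) : Cpx :=
  fold_right (fun x acc => Cadd (f x) acc) C0 l.

Definition nn_has_sum {T : Type} (f : T -> R) (s : R) : Prop :=
  is_lub (fun r => exists l, NoDup l /\ r = fin_sum f l) s.
Definition nn_summable {T : Type} (f : T -> R) : Prop := exists s, nn_has_sum f s.
Definition nnsum {T : Type} (f : T -> R) : R :=
  epsilon (inhabits 0) (fun s => nn_has_sum f s).

Definition C_has_sum {T : Type} (f : T -> Cpx) (S : Cpx) : Prop :=
  forall eps, eps > 0 -> exists l0, NoDup l0 /\
    forall l, NoDup l -> incl l0 l -> Cnorm (Csub (fin_sumC f l) S) < eps.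

Definition countable_set (V : Type) : Prop :=
  exists enc : V -> nat, forall x y, enc x = enc y -> x = y.

Definition is_graph {V : Type} (m : V -> R) (b : V -> V -> R) (c : V -> R) : Prop :=
  (forall x, 0 < m x) /\ (forall x, 0 <= c x) /\
  (forall x y, 0 <= b x y) /\ (forall x, b x x = 0) /\
  (forall x y, b x y = b y x) /\ (forall x, nn_summable (b x)).

(* a path x = x_1, ..., x_n = y, given as the list [x_1; ...; x_n] *)
Fixpoint chain {V : Type} (b : V -> V -> R) (x : V) (l : list V) : Prop :=
  match l with
  | [] => True
  | y :: l' => b x y > 0 /\ chain b y l'
  end.
Definition is_path {V : Type} (b : V -> V -> R) (x y : V) (p : list V) : Prop :=
  match p with
  | [] => False
  | x1 :: l => x1 = x /\ chain b x1 l /\ last p x1 = y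
  end.
Definition connected {V : Type} (b : V -> V -> R) : Prop :=
  forall x y, exists p, is_path b x y p.

Fixpoint path_length_from {V : Type} (b : V -> V -> R) (x : V) (l : list V) : R :=
  match l with
  | [] => 0
  | y :: l' => / sqrt (b x y) + path_length_from b y l'
  end.
Definition path_length {V : Type} (b : V -> V -> R) (p : list V) : R :=
  match p with [] => 0 | x :: l => path_length_from b x l end.

Definition is_glb (E : R -> Prop) (r : R) : Prop :=
  (forall z, E z -> r <= z) /\ (forall r', (forall z, E z -> r' <= z) -> r' <= r).

Definition dist {V : Type} (b : V -> V -> R) (x y : V) : R :=
  epsilon (inhabits 0)
    (fun r => is_glb (fun L => exists p, is_path b x y p /\ L = path_length b p) r).

(* ---------- metric completion: points of V^ are d-Cauchy sequences ---------- *)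
Definition cauchy {V : Type} (b : V -> V -> R) (s : nat -> V) : Prop :=
  forall eps, eps > 0 -> exists N, forall n k, (N <= n)%nat -> (N <= k)%nat ->
    dist b (s n) (s k) < eps.

Definition dhat {V : Type} (b : V -> V -> R) (s t : nat -> V) : R :=
  epsilon (inhabits 0) (fun r => Un_cv (fun n => dist b (s n) (t n)) r).

(* representatives of points of V_infty = V^ \ V *)
Definition Vinf_pt {V : Type} (b : V -> V -> R) (s : nat -> V) : Prop :=
  cauchy b s /\ ~ (exists x, Un_cv (fun n => dist b (s n) x) 0).

(* compactness of V^ (sequential compactness of the completion) *)
Definition Vhat_compact {V : Type} (b : V -> V -> R) : Prop :=
  forall S : nat -> nat -> V, (forall k, cauchy b (S k)) ->
    exists phi : nat -> nat, (forall k, (phi k < phi (Datatypes.S k))%nat) /\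
      exists t, cauchy b t /\ Un_cv (fun k => dhat b (S (phi k)) t) 0.

(* boundary value u_infty at the point of V_infty represented by s *)
Definition bval {V : Type} (u : V -> Cpx) (s : nat -> V) : Cpx :=
  epsilon (inhabits C0) (fun z => C_cv (fun n => u (s n)) z).

Definition in_l2 {V : Type} (m : V -> R) (u : V -> Cpx) : Prop :=
  nn_summable (fun x => Cmod2 (u x) * m x).

Definition in_DN {V : Type} (m : V -> R) (b : V -> V -> R) (c : V -> R) (u : V -> Cpx) : Prop :=
  in_l2 m u /\
  nn_summable (fun p : V * V => b (fst p) (snd p) * Cmod2 (Csub (u (fst p)) (u (snd p)))) /\
  nn_summable (fun x => c x * Cmod2 (u x)).

Definition QN {V : Type} (b : V -> V -> R) (c : V -> R) (u : V -> Cpx) : R :=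
  / 2 * nnsum (fun p : V * V => b (fst p) (snd p) * Cmod2 (Csub (u (fst p)) (u (snd p))))
  + nnsum (fun x => c x * Cmod2 (u x)).

Definition QN_norm2 {V : Type} (m : V -> R) (b : V -> V -> R) (c : V -> R) (u : V -> Cpx) : R :=
  QN b c u + nnsum (fun x => Cmod2 (u x) * m x).

Definition fin_supp {V : Type} (u : V -> Cpx) : Prop :=
  exists l : list V, forall x, ~ In x l -> u x = C0.

Definition fsub {V : Type} (u v : V -> Cpx) : V -> Cpx := fun x => Csub (u x) (v x).

(* D(Q^(D)): closure of C_c(V) in D(Q^(N)) w.r.t. the form norm *)
Definition in_DD {V : Type} (m : V -> R) (b : V -> V -> R) (c : V -> R) (u : V -> Cpx) : Prop :=
  in_DN m b c u /\
  forall eps, eps > 0 -> exists phi, fin_supp phi /\ QN_norm2 m b c (fsub u phi) < eps.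

Definition in_Ftilde {V : Type} (b : V -> V -> R) (u : V -> Cpx) : Prop :=
  forall x, nn_summable (fun y => b x y * Cnorm (u y)).

Definition Lt_plus_one_zero {V : Type} (m : V -> R) (b : V -> V -> R) (c : V -> R)
  (w : V -> Cpx) : Prop :=
  in_Ftilde b w /\
  forall x, exists S, C_has_sum (fun y => Cmul (RtoC (b x y)) (Csub (w x) (w y))) S /\
    Cadd (Cmul (RtoC (/ m x)) (Cadd S (Cmul (RtoC (c x)) (w x)))) (w x) = C0.

(* Main.v *)
From Pilot Require Import Defs.
From Stdlib Require Import Reals Lra Lia List Permutation ClassicalEpsilon Classical FunctionalExtensionality.
Import Pilot.Defs.
Import ListNotations.
Open Scope R_scope.

Definition dec (P : Prop) : bool := if excluded_middle_informative P then true else false.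
Lemma decP (P : Prop) : dec P = true <-> P.
Proof. unfold dec; destruct (excluded_middle_informative P); split; intros; auto; try discriminate; contradiction. Qed.
Lemma decF (P : Prop) : dec P = false <-> ~ P.
Proof. unfold dec; destruct (excluded_middle_informative P); split; intros; auto; try discriminate; contradiction. Qed.

Lemma decT {P : Prop} : dec P = true -> P.
Proof. apply decP. Qed.
Lemma decT' {P : Prop} : P -> dec P = true.
Proof. apply decP. Qed.
Lemma decF1 {P : Prop} : dec P = false -> ~ P.
Proof. apply decF. Qed.
Lemma decF' {P : Prop} : ~ P -> dec P = false.
Proof. apply decF. Qed.

Lemma fin_sum_cons {T} (f : T -> R) a l : fin_sum f (a :: l) = f a + fin_sum f l.
Proof. reflexivity. Qed.
Lemma fin_sum_nil {T} (f : T -> R) : fin_sum f [] = 0.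
Proof. reflexivity. Qed.
Lemma fin_sum_app {T} (f : T -> R) l1 l2 : fin_sum f (l1 ++ l2) = fin_sum f l1 + fin_sum f l2.
Proof. induction l1 as [|a l1 IH]; simpl app; rewrite ?fin_sum_cons, ?fin_sum_nil; [lra|]. rewrite IH; lra. Qed.
Lemma fin_sum_perm {T} (f : T -> R) l1 l2 : Permutation l1 l2 -> fin_sum f l1 = fin_sum f l2.
Proof. induction 1; rewrite ?fin_sum_cons; lra. Qed.
Lemma fin_sum_nonneg {T} (f : T -> R) l : (forall x, 0 <= f x) -> 0 <= fin_sum f l.
Proof. intros H; induction l; rewrite ?fin_sum_cons, ?fin_sum_nil; [lra|]. specialize (H a); lra. Qed.
Lemma fin_sum_le {T} (f g : T -> R) l : (forall x, f x <= g x) -> fin_sum f l <= fin_sum g l.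
Proof. intros H; induction l; rewrite ?fin_sum_cons, ?fin_sum_nil; [lra|]. specialize (H a); lra. Qed.
Lemma fin_sum_le_in {T} (f g : T -> R) l : (forall x, In x l -> f x <= g x) -> fin_sum f l <= fin_sum g l.
Proof. intros H; induction l; rewrite ?fin_sum_cons, ?fin_sum_nil; [lra|].
  assert (f a <= g a) by (apply H; left; auto). assert (fin_sum f l <= fin_sum g l) by (apply IHl; intros; apply H; right; auto). lra. Qed.
Lemma fin_sum_ext_in {T} (f g : T -> R) l : (forall x, In x l -> f x = g x) -> fin_sum f l = fin_sum g l.
Proof. intros H; apply Rle_antisym; apply fin_sum_le_in; intros x Hx; rewrite (H x Hx); lra. Qed.
Lemma fin_sum_plus {T} (f g : T -> R) l : fin_sum (fun x => f x + g x) l = fin_sum f l + fin_sum g l.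
Proof. induction l; rewrite ?fin_sum_cons, ?fin_sum_nil; lra. Qed.
Lemma fin_sum_scal {T} (f : T -> R) k l : fin_sum (fun x => k * f x) l = k * fin_sum f l.
Proof. induction l; rewrite ?fin_sum_cons, ?fin_sum_nil; [lra|]. rewrite IHl; ring. Qed.
Lemma fin_sum_zero {T} (f : T -> R) l : (forall x, In x l -> f x = 0) -> fin_sum f l = 0.
Proof. intros H; induction l; rewrite ?fin_sum_cons, ?fin_sum_nil; [lra|].
  rewrite IHl, (H a); [lra|left; auto|]. intros; apply H; right; auto. Qed.
Lemma fin_sum_map {A B} (f : B -> R) (g : A -> B) l : fin_sum f (map g l) = fin_sum (fun a => f (g a)) l.
Proof. induction l; simpl map; rewrite ?fin_sum_cons, ?fin_sum_nil; [lra|]. rewrite IHl; auto. Qed.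

Lemma incl_perm_split {T} (l1 l2 : list T) : NoDup l1 -> incl l1 l2 -> exists l3, Permutation l2 (l1 ++ l3).
Proof.
  revert l2; induction l1 as [|a l1 IH]; intros l2 Hnd Hi.
  - exists l2; simpl; apply Permutation_refl.
  - assert (Ha : In a l2) by (apply Hi; left; auto).
    destruct (in_split _ _ Ha) as [A [B HAB]]; subst l2.
    inversion Hnd; subst.
    destruct (IH (A ++ B)) as [l3 Hl3]; auto.
    + intros y Hy. assert (Hy2 : In y (A ++ a :: B)) by (apply Hi; right; auto).
      apply in_app_iff in Hy2; apply in_app_iff; destruct Hy2 as [H|[H|H]]; auto. subst; contradiction.
    + exists l3. simpl. eapply Permutation_trans; [apply Permutation_sym, Permutation_middle|]. constructor; auto.
Qed.

Lemma fin_sum_incl {T} (f : T -> R) l1 l2 : (forall x, 0 <= f x) -> NoDup l1 -> incl l1 l2 -> fin_sum f l1 <= fin_sum f l2.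
Proof. intros Hf Hnd Hi. destruct (incl_perm_split l1 l2 Hnd Hi) as [l3 H].
  rewrite (fin_sum_perm f _ _ H), fin_sum_app. pose proof (fin_sum_nonneg f l3 Hf); lra. Qed.

Lemma nodup_cover {T} (l : list T) : exists l', NoDup l' /\ forall x, In x l <-> In x l'.
Proof.
  induction l as [|a l [l' [H1 H2]]].
  - exists []; split; [constructor|]; simpl; tauto.
  - destruct (classic (In a l')) as [Ha|Ha].
    + exists l'; split; auto. intros x; simpl; rewrite H2; split; [intros [->|H]|]; auto.
    + exists (a :: l'); split; [constructor; auto|]. intros x; simpl; rewrite H2; tauto.
Qed.

Lemma nodup_union {T} (l1 l2 : list T) : exists l, NoDup l /\ incl l1 l /\ incl l2 l.
Proof. destruct (nodup_cover (l1 ++ l2)) as [l [H1 H2]]. exists l; split; auto.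
  split; intros x Hx; apply H2; apply in_app_iff; auto. Qed.

Lemma fin_sum_filter {T} (f : T -> R) (P : T -> bool) l :
  (forall x, P x = false -> f x = 0) -> fin_sum f l = fin_sum f (filter P l).
Proof. intros H; induction l as [|a l IH]; simpl; auto. destruct (P a) eqn:E; rewrite ?fin_sum_cons, IH; auto.
  rewrite (H a E); lra. Qed.

Lemma fin_sum_supp_le {T} (f : T -> R) (l L : list T) : (forall x, 0 <= f x) -> (forall x, ~ In x l -> f x = 0) ->
  NoDup L -> fin_sum f L <= fin_sum f l.
Proof. intros Hf Hz Hnd.
  rewrite (fin_sum_filter f (fun x => dec (In x l))).
  - apply fin_sum_incl; auto. apply NoDup_filter; auto.
    intros x Hx. apply filter_In in Hx. apply decT; tauto.
  - intros x Hx. apply Hz. apply decF1; auto.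
Qed.

Definition FSset {T} (f : T -> R) := fun r => exists l, NoDup l /\ r = fin_sum f l.

Lemma nn_has_sum_ub {T} (f : T -> R) s l : nn_has_sum f s -> NoDup l -> fin_sum f l <= s.
Proof. intros [H _] Hl. apply H. exists l; auto. Qed.

Lemma nnsum_spec {T} (f : T -> R) : nn_summable f -> nn_has_sum f (nnsum f).
Proof. intros H. unfold nnsum. apply epsilon_spec. exact H. Qed.

Lemma nnsum_ge {T} (f : T -> R) l : nn_summable f -> NoDup l -> fin_sum f l <= nnsum f.
Proof. intros H Hl. apply (nn_has_sum_ub f); auto. apply nnsum_spec; auto. Qed.

Lemma nnsum_nonneg {T} (f : T -> R) : nn_summable f -> 0 <= nnsum f.
Proof. intros H. rewrite <- (fin_sum_nil f). apply nnsum_ge; auto. constructor. Qed.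

Lemma nn_bound {T} (f : T -> R) M : (forall l, NoDup l -> fin_sum f l <= M) -> nn_summable f /\ nnsum f <= M.
Proof.
  intros H.
  assert (Hs : nn_summable f).
  { destruct (completeness (fun r => exists l, NoDup l /\ r = fin_sum f l)) as [s Hs].
    - exists M. intros r [l [Hl ->]]. auto.
    - exists 0, []. split; [constructor|reflexivity].
    - exists s; exact Hs. }
  split; auto. destruct (nnsum_spec f Hs) as [_ H2]. apply H2. intros r [l [Hl ->]]; auto.
Qed.

Lemma nnsum_approx {T} (f : T -> R) e : nn_summable f -> e > 0 -> exists l, NoDup l /\ nnsum f - e < fin_sum f l.
Proof.
  intros H He. destruct (nnsum_spec f H) as [_ H2].
  apply NNPP; intros Hn. assert (nnsum f <= nnsum f - e); [|lra].
  apply H2. intros r [l [Hl ->]]. apply Rnot_lt_le. intros Hlt. apply Hn. exists l; auto.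
Qed.

Lemma nnsum_mono {T} (f g : T -> R) : nn_summable g -> (forall x, f x <= g x) -> nn_summable f /\ nnsum f <= nnsum g.
Proof. intros Hg H. apply nn_bound. intros l Hl. eapply Rle_trans; [apply fin_sum_le, H|]. apply nnsum_ge; auto. Qed.

Lemma nnsum_le {T} (f g : T -> R) : nn_summable g -> (forall x, f x <= g x) -> nnsum f <= nnsum g.
Proof. intros; apply nnsum_mono; auto. Qed.
Lemma nn_summable_mono {T} (f g : T -> R) : nn_summable g -> (forall x, f x <= g x) -> nn_summable f.
Proof. intros; apply (nnsum_mono f g); auto. Qed.

Lemma le_of_eps (a b : R) : (forall e, e > 0 -> a < b + e) -> a <= b.
Proof. intros H. apply Rnot_lt_le; intros Hl. specialize (H ((a - b)/2)). lra. Qed.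

Lemma nnsum_plus {T} (f g : T -> R) : (forall x, 0 <= f x) -> (forall x, 0 <= g x) ->
  nn_summable f -> nn_summable g ->
  nn_summable (fun x => f x + g x) /\ nnsum (fun x => f x + g x) = nnsum f + nnsum g.
Proof.
  intros Hf Hg Sf Sg.
  destruct (nn_bound (fun x => f x + g x) (nnsum f + nnsum g)) as [S Hle].
  { intros l Hl. rewrite fin_sum_plus. pose proof (nnsum_ge f l Sf Hl); pose proof (nnsum_ge g l Sg Hl); lra. }
  split; auto. apply Rle_antisym; auto.
  apply le_of_eps; intros e He.
  destruct (nnsum_approx f (e/3) Sf) as [l1 [N1 H1]]; [lra|].
  destruct (nnsum_approx g (e/3) Sg) as [l2 [N2 H2]]; [lra|].
  destruct (nodup_union l1 l2) as [l [Nl [I1 I2]]].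
  pose proof (fin_sum_incl f l1 l Hf N1 I1). pose proof (fin_sum_incl g l2 l Hg N2 I2).
  pose proof (nnsum_ge _ l S Nl). rewrite fin_sum_plus in H3. lra.
Qed.

Lemma nnsum_scal {T} (f : T -> R) k : 0 <= k -> nn_summable f ->
  nn_summable (fun x => k * f x) /\ nnsum (fun x => k * f x) = k * nnsum f.
Proof.
  intros Hk Sf.
  destruct (nn_bound (fun x => k * f x) (k * nnsum f)) as [S Hle].
  { intros l Hl. rewrite fin_sum_scal. apply Rmult_le_compat_l; auto. apply nnsum_ge; auto. }
  split; auto. apply Rle_antisym; auto.
  destruct (Req_dec k 0) as [->|Hk0].
  - rewrite Rmult_0_l. apply nnsum_nonneg; auto.
  - destruct (nnsum_spec f Sf) as [_ H2].
    assert (nnsum f <= nnsum (fun x => k * f x) / k).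
    { apply H2. intros r [l [Hl ->]]. pose proof (nnsum_ge _ l S Hl). rewrite fin_sum_scal in H.
      apply (Rmult_le_reg_l k); [lra|]. field_simplify; lra. }
    apply (Rmult_le_compat_l k) in H; [|lra]. field_simplify in H; lra.
Qed.

Lemma nnsum_ext {T} (f g : T -> R) : (forall x, f x = g x) -> nnsum f = nnsum g.
Proof. intros H. replace f with g; auto. apply functional_extensionality; intros; auto. Qed.
Lemma nn_summable_ext {T} (f g : T -> R) : (forall x, f x = g x) -> nn_summable f -> nn_summable g.
Proof. intros H. replace g with f; auto. apply functional_extensionality; intros; auto. Qed.

Lemma nn_summable_zero {T} : nn_summable (fun _ : T => 0) /\ nnsum (fun _ : T => 0) = 0.
Proof. destruct (nn_bound (fun _ : T => 0) 0) as [S H].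
  { intros l _. rewrite fin_sum_zero; auto; lra. }
  split; auto. pose proof (nnsum_nonneg _ S). lra. Qed.

Lemma nn_summable_supp {T} (f : T -> R) (l : list T) : (forall x, 0 <= f x) -> (forall x, ~ In x l -> f x = 0) ->
  nn_summable f.
Proof. intros Hf Hz. apply (nn_bound f (fin_sum f l)). intros L HL. apply fin_sum_supp_le; auto. Qed.

Definition R_has_sum {T} (f : T -> R) (s : R) : Prop :=
  forall e, e > 0 -> exists l0, NoDup l0 /\ forall l, NoDup l -> incl l0 l -> Rabs (fin_sum f l - s) < e.

Lemma R_has_sum_nn {T} (f : T -> R) : (forall x, 0 <= f x) -> nn_summable f -> R_has_sum f (nnsum f).
Proof.
  intros Hf S e He. destruct (nnsum_approx f e S He) as [l0 [N0 H0]]. exists l0; split; auto.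
  intros l Nl Il. pose proof (fin_sum_incl f l0 l Hf N0 Il). pose proof (nnsum_ge f l S Nl).
  apply Rabs_def1; lra.
Qed.

Lemma R_has_sum_plus {T} (f g : T -> R) s t : R_has_sum f s -> R_has_sum g t -> R_has_sum (fun x => f x + g x) (s + t).
Proof.
  intros Hf Hg e He. destruct (Hf (e/2)) as [l1 [N1 H1]]; [lra|]. destruct (Hg (e/2)) as [l2 [N2 H2]]; [lra|].
  destruct (nodup_union l1 l2) as [l0 [N0 [I1 I2]]]. exists l0; split; auto.
  intros l Nl Il. rewrite fin_sum_plus.
  specialize (H1 l Nl (incl_tran I1 Il)). specialize (H2 l Nl (incl_tran I2 Il)).
  apply Rabs_def2 in H1; apply Rabs_def2 in H2. apply Rabs_def1; lra.
Qed.

Lemma R_has_sum_scal {T} (f : T -> R) s k : R_has_sum f s -> R_has_sum (fun x => k * f x) (k * s).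
Proof.
  intros Hf e He. destruct (Hf (e / (Rabs k + 1))) as [l0 [N0 H0]].
  { apply Rdiv_lt_0_compat; [lra|]. pose proof (Rabs_pos k); lra. }
  exists l0; split; auto. intros l Nl Il. rewrite fin_sum_scal.
  replace (k * fin_sum f l - k * s) with (k * (fin_sum f l - s)) by ring. rewrite Rabs_mult.
  specialize (H0 l Nl Il). pose proof (Rabs_pos k). pose proof (Rabs_pos (fin_sum f l - s)).
  apply Rle_lt_trans with ((Rabs k + 1) * Rabs (fin_sum f l - s)); [nra|].
  apply (Rmult_lt_compat_l (Rabs k + 1)) in H0; [|lra]. field_simplify in H0; [lra|lra].
Qed.

Lemma R_has_sum_unique {T} (f : T -> R) s t : R_has_sum f s -> R_has_sum f t -> s = t.
Proof.
  intros Hs Ht. apply NNPP; intros Hne. assert (He : Rabs (s - t) / 2 > 0).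
  { apply Rdiv_lt_0_compat; [|lra]. apply Rabs_pos_lt. intros H; apply Hne; lra. }
  destruct (Hs _ He) as [l1 [N1 H1]]; destruct (Ht _ He) as [l2 [N2 H2]].
  destruct (nodup_union l1 l2) as [l [N [I1 I2]]].
  specialize (H1 l N I1); specialize (H2 l N I2).
  pose proof (Rabs_triang (fin_sum f l - t) (s - fin_sum f l)).
  replace (fin_sum f l - t + (s - fin_sum f l)) with (s - t) in H by ring.
  rewrite Rabs_minus_sym in H1. lra.
Qed.

Lemma R_has_sum_ext {T} (f g : T -> R) s : (forall x, f x = g x) -> R_has_sum f s -> R_has_sum g s.
Proof. intros H. replace g with f; auto. apply functional_extensionality; auto. Qed.

Lemma R_has_sum_zero {T} : R_has_sum (fun _ : T => 0) 0.
Proof. intros e He. exists []; split; [constructor|]. intros l _ _. rewrite fin_sum_zero; auto. rewrite Rminus_0_r, Rabs_R0; lra. Qed.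

Lemma R_has_sum_dom {T} (f g : T -> R) : (forall x, Rabs (f x) <= g x) -> nn_summable g -> exists s, R_has_sum f s.
Proof.
  intros H S.
  assert (S1 : nn_summable (fun x => Rmax (f x) 0)).
  { apply (nn_summable_mono _ g S). intros x; specialize (H x). unfold Rmax; destruct (Rle_dec (f x) 0).
    - pose proof (Rabs_pos (f x)); lra.
    - rewrite Rabs_right in H; lra. }
  assert (S2 : nn_summable (fun x => Rmax (- f x) 0)).
  { apply (nn_summable_mono _ g S). intros x; specialize (H x). unfold Rmax; destruct (Rle_dec (- f x) 0).
    - pose proof (Rabs_pos (f x)); lra.
    - rewrite Rabs_left in H; lra. }
  pose proof (R_has_sum_nn _ (fun x => Rmax_r _ _) S1) as H1.
  pose proof (R_has_sum_nn _ (fun x => Rmax_r _ _) S2) as H2.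
  apply (R_has_sum_scal _ _ (-1)) in H2.
  eexists. eapply R_has_sum_ext; [|apply (R_has_sum_plus _ _ _ _ H1 H2)].
  intros x; simpl. unfold Rmax; destruct (Rle_dec (f x) 0); destruct (Rle_dec (- f x) 0); lra.
Qed.

Lemma NoDup_map_inj {A B} (f : A -> B) l : (forall x y, f x = f y -> x = y) -> NoDup l -> NoDup (map f l).
Proof. intros Hi Hn; induction Hn; simpl; constructor; auto. intros Hin. apply in_map_iff in Hin.
  destruct Hin as [y [Hy Hy2]]. apply Hi in Hy; subst; contradiction. Qed.

Lemma reindex_fin {A B} (h : B -> R) (i : A -> B) (k : B -> A) (P : B -> Prop) L :
  (forall b, P b -> i (k b) = b) -> (forall b, ~ P b -> h b = 0) ->
  fin_sum h L = fin_sum (fun a => h (i a)) (map k (filter (fun b => dec (P b)) L)).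
Proof.
  intros H1 H2. induction L as [|b L IH]; simpl; auto.
  destruct (dec (P b)) eqn:E; simpl map; rewrite ?fin_sum_cons, IH.
  - apply decT in E. rewrite (H1 b E); auto.
  - apply decF1 in E. rewrite (H2 b E); lra.
Qed.

Lemma reindex_nodup {A B} (i : A -> B) (k : B -> A) (P : B -> Prop) L :
  (forall b, P b -> i (k b) = b) -> NoDup L -> NoDup (map k (filter (fun b => dec (P b)) L)).
Proof.
  intros H1 Hn. induction Hn as [|b L Hb Hn IH]; simpl; [constructor|].
  destruct (dec (P b)) eqn:E; simpl; auto. constructor; auto.
  intros Hin. apply in_map_iff in Hin. destruct Hin as [c [Hc Hc2]]. apply filter_In in Hc2.
  destruct Hc2 as [Hc2 Hc3]. apply decT in E; apply decT in Hc3.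
  assert (b = c) by (rewrite <- (H1 b E), <- (H1 c Hc3), Hc; auto). subst; contradiction.
Qed.

Lemma R_has_sum_reindex {A B} (h : B -> R) (i : A -> B) (k : B -> A) (P : B -> Prop) s :
  (forall a, P (i a)) -> (forall b, P b -> i (k b) = b) -> (forall a, k (i a) = a) ->
  (forall b, ~ P b -> h b = 0) -> R_has_sum (fun a => h (i a)) s -> R_has_sum h s.
Proof.
  intros HP H1 H2 H3 Hs e He. destruct (Hs e He) as [l0 [N0 H0]].
  exists (map i l0); split.
  - apply NoDup_map_inj; auto. intros x y Hxy. rewrite <- (H2 x), <- (H2 y), Hxy; auto.
  - intros l Nl Il. rewrite (reindex_fin h i k P l H1 H3). apply H0.
    + apply reindex_nodup with (i := i); auto.
    + intros a Ha. apply in_map_iff. exists (i a); split; auto. apply filter_In; split.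
      * apply Il, in_map; auto.
      * apply decT'; auto.
Qed.

Lemma nn_reindex {A B} (h : B -> R) (i : A -> B) (k : B -> A) (P : B -> Prop) :
  (forall a, P (i a)) -> (forall b, P b -> i (k b) = b) -> (forall a, k (i a) = a) ->
  (forall b, ~ P b -> h b = 0) -> (forall b, 0 <= h b) -> nn_summable (fun a => h (i a)) ->
  nn_summable h /\ nnsum h = nnsum (fun a => h (i a)).
Proof.
  intros HP H1 H2 H3 H4 S.
  assert (Sh : nn_summable h).
  { apply (nn_bound h (nnsum (fun a => h (i a)))). intros L NL. rewrite (reindex_fin h i k P L H1 H3).
    apply nnsum_ge; auto. apply reindex_nodup with (i := i); auto. }
  split; auto. apply (R_has_sum_unique h); [apply R_has_sum_nn; auto|].
  apply (R_has_sum_reindex h i k P); auto. apply R_has_sum_nn; auto.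
Qed.

Lemma R_has_sum_single {T} (x : T) (r : R) : R_has_sum (fun z => if dec (z = x) then r else 0) r.
Proof.
  apply (R_has_sum_reindex _ (fun _ : unit => x) (fun _ => tt) (fun z => z = x)); auto.
  - intros [] ; auto.
  - intros b Hb. destruct (dec (b = x)) eqn:E; auto. apply decT in E; contradiction.
  - intros e He. exists [tt]; split; [constructor; [simpl; tauto|constructor]|].
    intros l Nl Il. destruct l as [|[] l'].
    + exfalso; apply (Il tt); left; auto.
    + destruct l' as [|[] l''].
      * rewrite fin_sum_cons, fin_sum_nil. simpl. destruct (dec (x = x)) eqn:E.
        -- replace (r + 0 - r) with 0 by ring. rewrite Rabs_R0; lra.
        -- apply decF1 in E; contradiction.
      * inversion Nl; subst. exfalso; apply H1; left; auto.
Qed.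

Lemma Cmod2_nonneg z : 0 <= Cmod2 z.
Proof. unfold Cmod2, Rsqr; nra. Qed.
Lemma Cnorm_nonneg z : 0 <= Cnorm z.
Proof. apply sqrt_pos. Qed.
Lemma Cnorm_sq z : Cnorm z * Cnorm z = Cmod2 z.
Proof. apply sqrt_sqrt, Cmod2_nonneg. Qed.
Lemma Cnorm_fst z : Rabs (fst z) <= Cnorm z.
Proof. unfold Cnorm, Cmod2. rewrite <- sqrt_Rsqr_abs. apply sqrt_le_1_alt. pose proof (Rle_0_sqr (snd z)); lra. Qed.
Lemma Cnorm_snd z : Rabs (snd z) <= Cnorm z.
Proof. unfold Cnorm, Cmod2. rewrite <- sqrt_Rsqr_abs. apply sqrt_le_1_alt. pose proof (Rle_0_sqr (fst z)); lra. Qed.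
Lemma Cnorm_le_abs z : Cnorm z <= Rabs (fst z) + Rabs (snd z).
Proof.
  unfold Cnorm, Cmod2. pose proof (Rabs_pos (fst z)); pose proof (Rabs_pos (snd z)).
  rewrite <- (sqrt_Rsqr (Rabs (fst z) + Rabs (snd z))) by lra. apply sqrt_le_1_alt.
  rewrite (Rsqr_abs (fst z)), (Rsqr_abs (snd z)). unfold Rsqr; nra.
Qed.
Lemma Cnorm_le_iff z r : 0 <= r -> (Cnorm z <= r <-> Cmod2 z <= r * r).
Proof. intros Hr. pose proof (Cnorm_nonneg z). rewrite <- Cnorm_sq. split; intros; nra. Qed.
Lemma Cnorm_triang a b : Cnorm (Cadd a b) <= Cnorm a + Cnorm b.
Proof.
  pose proof (Cnorm_nonneg a); pose proof (Cnorm_nonneg b).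
  apply Cnorm_le_iff; [lra|]. pose proof (Cnorm_sq a); pose proof (Cnorm_sq b).
  destruct a as [a1 a2], b as [b1 b2]; unfold Cmod2, Cadd, Rsqr in *; simpl in *.
  set (na := Cnorm (a1, a2)) in *; set (nb := Cnorm (b1, b2)) in *.
  assert (a1 * b1 + a2 * b2 <= na * nb).
  { assert (E : (na * nb) * (na * nb) = (na * na) * (nb * nb)) by ring.
    assert ((a1 * b1 + a2 * b2) * (a1 * b1 + a2 * b2) <= (na * nb) * (na * nb)).
    { rewrite E, H1, H2. pose proof (Rle_0_sqr (a1 * b2 - a2 * b1)); unfold Rsqr in *; nra. }
    assert (0 <= na * nb) by nra. nra. }
  nra.
Qed.
Lemma Csub_components a b : Csub a b = (fst a - fst b, snd a - snd b).
Proof. unfold Csub, Cadd, Copp; simpl; f_equal. Qed.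
Lemma Cnorm_sub_triang a b c : Cnorm (Csub a c) <= Cnorm (Csub a b) + Cnorm (Csub b c).
Proof. replace (Csub a c) with (Cadd (Csub a b) (Csub b c)); [apply Cnorm_triang|].
  rewrite !Csub_components; unfold Cadd; simpl; f_equal; ring. Qed.
Lemma Cnorm_sub_sym a b : Cnorm (Csub a b) = Cnorm (Csub b a).
Proof. rewrite !Csub_components; unfold Cnorm, Cmod2, Rsqr; simpl; f_equal; ring. Qed.
Lemma Cnorm_C0 : Cnorm C0 = 0.
Proof. unfold Cnorm, Cmod2, C0, Rsqr; simpl. replace (0*0+0*0) with 0 by ring. apply sqrt_0. Qed.
Lemma Cnorm_eq0 z : Cnorm z = 0 -> z = C0.
Proof. intros H. pose proof (Cnorm_fst z); pose proof (Cnorm_snd z). destruct z as [a b]; unfold C0; simpl in *.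
  pose proof (Rabs_pos a); pose proof (Rabs_pos b).
  f_equal; [destruct (Req_dec a 0)|destruct (Req_dec b 0)]; auto; exfalso;
  [pose proof (Rabs_pos_lt a H4)|pose proof (Rabs_pos_lt b H4)]; lra. Qed.

Lemma fst_fin_sumC {T} (f : T -> Cpx) l : fst (fin_sumC f l) = fin_sum (fun x => fst (f x)) l.
Proof. induction l; simpl; auto. rewrite <- IHl; auto. Qed.
Lemma snd_fin_sumC {T} (f : T -> Cpx) l : snd (fin_sumC f l) = fin_sum (fun x => snd (f x)) l.
Proof. induction l; simpl; auto. rewrite <- IHl; auto. Qed.

Lemma C_has_sum_of_R {T} (f : T -> Cpx) a b :
  R_has_sum (fun x => fst (f x)) a -> R_has_sum (fun x => snd (f x)) b -> C_has_sum f (a, b).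
Proof.
  intros H1 H2 e He.
  destruct (H1 (e/2)) as [l1 [N1 K1]]; [lra|]. destruct (H2 (e/2)) as [l2 [N2 K2]]; [lra|].
  destruct (nodup_union l1 l2) as [l0 [N0 [I1 I2]]]. exists l0; split; auto.
  intros l Nl Il. specialize (K1 l Nl (incl_tran I1 Il)); specialize (K2 l Nl (incl_tran I2 Il)).
  eapply Rle_lt_trans; [apply Cnorm_le_abs|]. rewrite Csub_components; simpl.
  rewrite fst_fin_sumC, snd_fin_sumC. lra.
Qed.

Lemma C_cv_iff s z : C_cv s z <-> Un_cv (fun n => fst (s n)) (fst z) /\ Un_cv (fun n => snd (s n)) (snd z).
Proof.
  split.
  - intros H; split; intros e He; destruct (H e He) as [N HN]; exists N; intros n Hn; unfold R_dist;
    specialize (HN n Hn); rewrite Csub_components in HN.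
    + pose proof (Cnorm_fst (fst (s n) - fst z, snd (s n) - snd z)); simpl in *; lra.
    + pose proof (Cnorm_snd (fst (s n) - fst z, snd (s n) - snd z)); simpl in *; lra.
  - intros [H1 H2] e He. destruct (H1 (e/2)) as [N1 K1]; [lra|]. destruct (H2 (e/2)) as [N2 K2]; [lra|].
    exists (max N1 N2). intros n Hn. specialize (K1 n ltac:(lia)). specialize (K2 n ltac:(lia)).
    unfold R_dist in *. eapply Rle_lt_trans; [apply Cnorm_le_abs|]. rewrite Csub_components; simpl. lra.
Qed.

Lemma C_cv_unique s a c : C_cv s a -> C_cv s c -> a = c.
Proof. intros Ha Hc. apply C_cv_iff in Ha; apply C_cv_iff in Hc. destruct Ha, Hc.
  destruct a, c; simpl in *. f_equal; eapply UL_sequence; eauto. Qed.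

Lemma C_cv_ext s t z : (forall n, s n = t n) -> C_cv s z -> C_cv t z.
Proof. intros H. replace t with s; auto. apply functional_extensionality; auto. Qed.

Lemma Un_cv_ext' u v l : (forall n, u n = v n) -> Un_cv u l -> Un_cv v l.
Proof. intros H. replace v with u; auto. apply functional_extensionality; auto. Qed.

Lemma Un_cv_const c : Un_cv (fun _ => c) c.
Proof. intros e He; exists 0%nat; intros; unfold R_dist; rewrite Rminus_diag, Rabs_R0; auto. Qed.

Lemma Un_cv_lin2 u v a c p q : Un_cv u a -> Un_cv v c -> Un_cv (fun n => p * u n + q * v n) (p * a + q * c).
Proof. intros Hu Hv. apply CV_plus; apply CV_mult; auto; apply Un_cv_const. Qed.

Lemma C_cv_lin s t x y al be : C_cv s x -> C_cv t y ->
  C_cv (fun n => Cadd (Cmul al (s n)) (Cmul be (t n))) (Cadd (Cmul al x) (Cmul be y)).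
Proof.
  intros Hs Ht. apply C_cv_iff in Hs; apply C_cv_iff in Ht. destruct Hs as [s1 s2], Ht as [t1 t2].
  apply C_cv_iff; split; simpl.
  - pose proof (Un_cv_lin2 _ _ _ _ (fst al) (- snd al) s1 s2) as A1.
    pose proof (Un_cv_lin2 _ _ _ _ (fst be) (- snd be) t1 t2) as A2.
    pose proof (Un_cv_lin2 _ _ _ _ 1 1 A1 A2) as A3.
    eapply Un_cv_ext'; [|replace (fst al * fst x - snd al * snd x + (fst be * fst y - snd be * snd y)) with
      (1 * (fst al * fst x + - snd al * snd x) + 1 * (fst be * fst y + - snd be * snd y)) by ring; exact A3].
    intros n; simpl; ring.
  - pose proof (Un_cv_lin2 _ _ _ _ (fst al) (snd al) s2 s1) as A1.
    pose proof (Un_cv_lin2 _ _ _ _ (fst be) (snd be) t2 t1) as A2.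
    pose proof (Un_cv_lin2 _ _ _ _ 1 1 A1 A2) as A3.
    eapply Un_cv_ext'; [|replace (fst al * snd x + snd al * fst x + (fst be * snd y + snd be * fst y)) with
      (1 * (fst al * snd x + snd al * fst x) + 1 * (fst be * snd y + snd be * fst y)) by ring; exact A3].
    intros n; simpl; ring.
Qed.

Lemma C_cauchy_cv s : (forall e, e > 0 -> exists N, forall n k, (N <= n)%nat -> (N <= k)%nat -> Cnorm (Csub (s n) (s k)) < e) ->
  exists z, C_cv s z.
Proof.
  intros H.
  assert (H1 : Cauchy_crit (fun n => fst (s n))).
  { intros e He. destruct (H e He) as [N HN]. exists N. intros n k Hn Hk. unfold R_dist.
    specialize (HN n k Hn Hk). rewrite Csub_components in HN.
    pose proof (Cnorm_fst (fst (s n) - fst (s k), snd (s n) - snd (s k))); simpl in *; lra. }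
  assert (H2 : Cauchy_crit (fun n => snd (s n))).
  { intros e He. destruct (H e He) as [N HN]. exists N. intros n k Hn Hk. unfold R_dist.
    specialize (HN n k Hn Hk). rewrite Csub_components in HN.
    pose proof (Cnorm_snd (fst (s n) - fst (s k), snd (s n) - snd (s k))); simpl in *; lra. }
  destruct (R_complete _ H1) as [a Ha]. destruct (R_complete _ H2) as [c Hc].
  exists (a, c). apply C_cv_iff; auto.
Qed.

Lemma last_default {T} (a : T) l d d' : last (a :: l) d = last (a :: l) d'.
Proof. revert a; induction l as [|c l IH]; intros a; [reflexivity|].
  change (last (c :: l) d = last (c :: l) d'). apply IH. Qed.

Lemma chain_app {V} (b : V -> V -> R) x l1 l2 :
  chain b x (l1 ++ l2) <-> chain b x l1 /\ chain b (last (x :: l1) x) l2.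
Proof.
  revert x; induction l1 as [|a l1 IH]; intros x; [simpl; tauto|].
  change (b x a > 0 /\ chain b a (l1 ++ l2) <-> (b x a > 0 /\ chain b a l1) /\ chain b (last (a :: l1) x) l2).
  rewrite IH. rewrite (last_default a l1 x a). tauto.
Qed.

Lemma plf_app {V} (b : V -> V -> R) x l1 l2 :
  path_length_from b x (l1 ++ l2) = path_length_from b x l1 + path_length_from b (last (x :: l1) x) l2.
Proof.
  revert x; induction l1 as [|a l1 IH]; intros x; [simpl; lra|].
  change (/ sqrt (b x a) + path_length_from b a (l1 ++ l2) = (/ sqrt (b x a) + path_length_from b a l1) + path_length_from b (last (a :: l1) x) l2).
  rewrite IH. rewrite (last_default a l1 x a). lra.
Qed.

Lemma last_app' {T} (x : T) l1 l2 : last (x :: l1 ++ l2) x = last (last (x :: l1) x :: l2) (last (x :: l1) x).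
Proof.
  revert x; induction l1 as [|a l1 IH]; intros x; simpl app; [reflexivity|].
  change (last (x :: a :: l1 ++ l2) x) with (last (a :: l1 ++ l2) x).
  change (last (x :: a :: l1) x) with (last (a :: l1) x).
  rewrite (last_default a (l1 ++ l2) x a), (last_default a l1 x a). apply IH.
Qed.

Lemma inv_sqrt_nonneg r : 0 <= / sqrt r.
Proof. destruct (Req_dec (sqrt r) 0) as [H|H]. - rewrite H, Rinv_0; lra.
  - apply Rlt_le, Rinv_0_lt_compat. pose proof (sqrt_pos r); lra. Qed.

Lemma plf_nonneg {V} (b : V -> V -> R) x l : 0 <= path_length_from b x l.
Proof. revert x; induction l; intros; simpl; [lra|]. pose proof (inv_sqrt_nonneg (b x a)); specialize (IHl a); lra. Qed.

Definition pathset {V} (b : V -> V -> R) (x y : V) : R -> Prop :=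
  fun L => exists p, is_path b x y p /\ L = path_length b p.

Lemma pathset_nonneg {V} (b : V -> V -> R) x y L : pathset b x y L -> 0 <= L.
Proof. intros [p [Hp ->]]. destruct p; simpl; [lra|]. apply plf_nonneg. Qed.

Lemma dist_spec {V} (b : V -> V -> R) (Hc : connected b) x y : is_glb (pathset b x y) (dist b x y).
Proof.
  unfold dist. apply epsilon_spec.
  destruct (completeness (fun r => pathset b x y (- r))) as [m [Hm1 Hm2]].
  - exists 0. intros r Hr. apply pathset_nonneg in Hr. lra.
  - destruct (Hc x y) as [p Hp]. exists (- path_length b p). exists p; split; auto. ring.
  - exists (- m). split.
    + intros z Hz. assert (- z <= m) by (apply Hm1; rewrite Ropp_involutive; auto). lra.
    + intros r' Hr'. assert (m <= - r'); [|lra]. apply Hm2. intros z Hz. specialize (Hr' _ Hz). lra.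
Qed.

Lemma dist_nonneg {V} (b : V -> V -> R) (Hc : connected b) x y : 0 <= dist b x y.
Proof. destruct (dist_spec b Hc x y) as [_ H]. apply H. intros; eapply pathset_nonneg; eauto. Qed.

Lemma dist_le_path {V} (b : V -> V -> R) (Hc : connected b) x y p : is_path b x y p -> dist b x y <= path_length b p.
Proof. intros Hp. destruct (dist_spec b Hc x y) as [H _]. apply H. exists p; auto. Qed.

Lemma dist_approx {V} (b : V -> V -> R) (Hc : connected b) x y e : e > 0 ->
  exists p, is_path b x y p /\ path_length b p < dist b x y + e.
Proof.
  intros He. apply NNPP; intros Hn. destruct (dist_spec b Hc x y) as [_ H].
  assert (dist b x y + e <= dist b x y); [|lra]. apply H. intros z [p [Hp ->]].
  apply Rnot_lt_le; intros Hl; apply Hn; exists p; auto.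
Qed.

Lemma dist_refl {V} (b : V -> V -> R) (Hc : connected b) x : dist b x x = 0.
Proof. apply Rle_antisym; [|apply dist_nonneg; auto].
  replace 0 with (path_length b [x]) by reflexivity. apply dist_le_path; auto. simpl; auto. Qed.

Lemma dist_triangle {V} (b : V -> V -> R) (Hc : connected b) x y z : dist b x z <= dist b x y + dist b y z.
Proof.
  apply le_of_eps; intros e He.
  destruct (dist_approx b Hc x y (e/2)) as [p1 [Hp1 HL1]]; [lra|].
  destruct p1 as [|x1 l1]; [destruct Hp1|]. destruct Hp1 as [Hx1 [Hc1 Hl1]].
  destruct (dist_approx b Hc y z (e/2)) as [p2 [Hp2 HL2]]; [lra|].
  destruct p2 as [|y1 l2]; [destruct Hp2|]. destruct Hp2 as [Hy1 [Hc2 Hl2]]. subst x1 y1.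
  assert (Hp : is_path b x z (x :: l1 ++ l2)).
  { split; auto. split. - apply chain_app; split; auto. rewrite Hl1; auto.
    - rewrite last_app', Hl1. auto. }
  pose proof (dist_le_path b Hc _ _ _ Hp). simpl path_length in H, HL1, HL2.
  rewrite plf_app, Hl1 in H. lra.
Qed.

Lemma lip_chain {V} (b : V -> V -> R) (u : V -> Cpx) K :
  (forall x y, b x y > 0 -> Cnorm (Csub (u x) (u y)) <= K * / sqrt (b x y)) ->
  forall l x, chain b x l -> Cnorm (Csub (u x) (u (last (x :: l) x))) <= K * path_length_from b x l.
Proof.
  intros HK l; induction l as [|a l IH]; intros x Hch.
  - simpl. rewrite Rmult_0_r. replace (Csub (u x) (u x)) with C0. rewrite Cnorm_C0; lra.
    rewrite Csub_components; unfold C0; f_equal; ring.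
  - destruct Hch as [Hb Hch]. change (last (x :: a :: l) x) with (last (a :: l) x).
    rewrite (last_default a l x a). simpl path_length_from.
    eapply Rle_trans; [apply (Cnorm_sub_triang _ (u a))|]. specialize (IH a Hch). specialize (HK x a Hb). lra.
Qed.

Lemma lip_dist {V} (b : V -> V -> R) (Hc : connected b) (u : V -> Cpx) K : 0 <= K ->
  (forall x y, b x y > 0 -> Cnorm (Csub (u x) (u y)) <= K * / sqrt (b x y)) ->
  forall x y, Cnorm (Csub (u x) (u y)) <= K * dist b x y.
Proof.
  intros HK0 HK x y.
  assert (Hp : forall p, is_path b x y p -> Cnorm (Csub (u x) (u y)) <= K * path_length b p).
  { intros p Hp. destruct p as [|x1 l]; [destruct Hp|]. destruct Hp as [Hx1 [Hch Hl]]. subst x1.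
    simpl path_length. rewrite <- Hl. apply lip_chain; auto. }
  destruct (Req_dec K 0) as [->|HK1].
  - destruct (Hc x y) as [p Hp0]. specialize (Hp p Hp0). lra.
  - assert (Cnorm (Csub (u x) (u y)) / K <= dist b x y).
    { destruct (dist_spec b Hc x y) as [_ H]. apply H. intros z [p [Hp1 ->]]. specialize (Hp p Hp1).
      apply (Rmult_le_reg_l K); [lra|]. field_simplify; lra. }
    apply (Rmult_le_compat_l K) in H; [|lra]. field_simplify in H; lra.
Qed.

Lemma b_le_deg {V} (m : V -> R) b c (Hg : is_graph m b c) x y : b x y <= nnsum (b x).
Proof. destruct Hg as [_ [_ [_ [_ [_ Hs]]]]]. replace (b x y) with (fin_sum (b x) [y]) by (simpl; ring).
  apply nnsum_ge; auto. constructor; [simpl; tauto|constructor]. Qed.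

Lemma plf_lower {V} (m : V -> R) b c (Hg : is_graph m b c) :
  forall l x, l <> [] -> chain b x l -> / sqrt (nnsum (b (last (x :: l) x))) <= path_length_from b x l.
Proof.
  intros l; induction l as [|a l IH]; intros x Hne Hch; [congruence|].
  destruct Hch as [Hb Hch]. change (last (x :: a :: l) x) with (last (a :: l) x).
  rewrite (last_default a l x a). simpl path_length_from.
  destruct l as [|a' l'].
  - simpl last. simpl path_length_from. rewrite Rplus_0_r. apply Rinv_le_contravar.
    + apply sqrt_lt_R0; auto.
    + apply sqrt_le_1_alt. destruct Hg as [H1 [H2 [H3 [H4 [H5 H6]]]]]. rewrite H5.
      apply (b_le_deg m b c); repeat split; auto.
  - pose proof (inv_sqrt_nonneg (b x a)). specialize (IH a ltac:(congruence) Hch). lra.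
Qed.

Lemma dist_lower {V} (m : V -> R) b c (Hg : is_graph m b c) (Hc : connected b) x y : x <> y ->
  / sqrt (nnsum (b y)) <= dist b x y.
Proof.
  intros Hne. destruct (dist_spec b Hc x y) as [_ H]. apply H. intros z [p [Hp ->]].
  destruct p as [|x1 l]; [destruct Hp|]. destruct Hp as [Hx1 [Hch Hl]]. subst x1.
  simpl path_length. rewrite <- Hl. apply (plf_lower m b c Hg); auto.
  intros ->. simpl in Hl. congruence.
Qed.

Lemma cauchy_const {V} (b : V -> V -> R) (Hc : connected b) x : cauchy b (fun _ => x).
Proof. intros e He; exists 0%nat; intros; rewrite dist_refl; auto. Qed.

Lemma dhat_spec {V} (b : V -> V -> R) (Hc : connected b) s t : cauchy b s -> cauchy b t ->
  Un_cv (fun n => dist b (s n) (t n)) (dhat b s t).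
Proof.
  intros Hs Ht. unfold dhat. apply epsilon_spec.
  assert (Cauchy_crit (fun n => dist b (s n) (t n))).
  { intros e He. destruct (Hs (e/2)) as [N1 H1]; [lra|]. destruct (Ht (e/2)) as [N2 H2]; [lra|].
    exists (max N1 N2). intros n k Hn Hk. unfold R_dist.
    pose proof (dist_triangle b Hc (s n) (s k) (t n)). pose proof (dist_triangle b Hc (s k) (t k) (t n)).
    pose proof (dist_triangle b Hc (s k) (s n) (t k)). pose proof (dist_triangle b Hc (s n) (t n) (t k)).
    pose proof (H1 n k ltac:(lia) ltac:(lia)). pose proof (H1 k n ltac:(lia) ltac:(lia)).
    pose proof (H2 n k ltac:(lia) ltac:(lia)). pose proof (H2 k n ltac:(lia) ltac:(lia)).
    apply Rabs_def1; lra. }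
  destruct (R_complete _ H) as [l Hl]. exists l; auto.
Qed.

Lemma dist_sym_le_cauchy {V} (b : V -> V -> R) (Hc : connected b) s :
  cauchy b s -> exists N, forall n, (N <= n)%nat -> dist b (s N) (s n) < 1.
Proof. intros Hs. destruct (Hs 1) as [N HN]; [lra|]. exists N; intros; apply HN; lia. Qed.

Lemma vinf_avoid_pt {V} (b : V -> V -> R) (Hc : connected b) s x : Vinf_pt b s ->
  exists N, forall n, (N <= n)%nat -> s n <> x.
Proof.
  intros [Hs Hv]. apply NNPP; intros Hn. apply Hv. exists x.
  intros e He. destruct (Hs e He) as [N HN]. exists N. intros n Hnn. unfold R_dist.
  assert (exists k, (N <= k)%nat /\ s k = x).
  { apply NNPP; intros Hk. apply Hn. exists N. intros k Hk1 Hk2. apply Hk; exists k; auto. }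
  destruct H as [k [Hk <-]]. rewrite Rminus_0_r. rewrite Rabs_right; [apply HN; lia|].
  apply Rle_ge, dist_nonneg; auto.
Qed.

Lemma vinf_avoid {V} (b : V -> V -> R) (Hc : connected b) s l : Vinf_pt b s ->
  exists N, forall n, (N <= n)%nat -> ~ In (s n) l.
Proof.
  intros Hv. induction l as [|x l IH]. - exists 0%nat; simpl; auto.
  - destruct IH as [N1 H1]. destruct (vinf_avoid_pt b Hc s x Hv) as [N2 H2].
    exists (max N1 N2). intros n Hn [H|H]. + apply (H2 n); [lia|auto]. + apply (H1 n); [lia|auto].
Qed.

Lemma Cmod2_add_le a b t : t > 0 -> Cmod2 (Cadd a b) <= (1 + t) * Cmod2 a + (1 + / t) * Cmod2 b.
Proof.
  intros Ht. destruct a as [a1 a2], b as [b1 b2]; unfold Cmod2, Cadd, Rsqr; simpl.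
  assert (H1 : 0 <= (t * a1 - b1) * (t * a1 - b1) * / t) by (apply Rmult_le_pos; [apply Rle_0_sqr|apply Rlt_le, Rinv_0_lt_compat; lra]).
  assert (H2 : 0 <= (t * a2 - b2) * (t * a2 - b2) * / t) by (apply Rmult_le_pos; [apply Rle_0_sqr|apply Rlt_le, Rinv_0_lt_compat; lra]).
  assert ((1+t)*(a1*a1+a2*a2) + (1+/t)*(b1*b1+b2*b2) - ((a1+b1)*(a1+b1)+(a2+b2)*(a2+b2)) = (t*a1-b1)*(t*a1-b1)*/t + (t*a2-b2)*(t*a2-b2)*/t) by (field; lra).
  lra.
Qed.

Lemma Cmod2_mul a z : Cmod2 (Cmul a z) = Cmod2 a * Cmod2 z.
Proof. destruct a, z; unfold Cmod2, Cmul, Rsqr; simpl; ring. Qed.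
Lemma Cmod2_sub_sym a z : Cmod2 (Csub a z) = Cmod2 (Csub z a).
Proof. destruct a, z; unfold Cmod2, Csub, Cadd, Copp, Rsqr; simpl; ring. Qed.
Lemma Csub_Cadd a b c d : Csub (Cadd a b) (Cadd c d) = Cadd (Csub a c) (Csub b d).
Proof. destruct a, b, c, d; unfold Csub, Cadd, Copp; simpl; f_equal; ring. Qed.
Lemma Csub_Cmul al a c : Csub (Cmul al a) (Cmul al c) = Cmul al (Csub a c).
Proof. destruct al, a, c; unfold Csub, Cadd, Copp, Cmul; simpl; f_equal; ring. Qed.
Lemma Csub_C0 z : Csub z C0 = z.
Proof. destruct z; unfold Csub, Cadd, Copp, C0; simpl; f_equal; ring. Qed.
Lemma Csub_self z : Csub z z = C0.
Proof. destruct z; unfold Csub, Cadd, Copp, C0; simpl; f_equal; ring. Qed.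
Lemma Cmod2_C0 : Cmod2 C0 = 0.
Proof. unfold Cmod2, C0, Rsqr; simpl; ring. Qed.
Lemma Cnorm_sqrt z : Cnorm z = sqrt (Cmod2 z).
Proof. reflexivity. Qed.

Definition E1 {V} (b : V -> V -> R) (u : V -> Cpx) (p : V * V) : R :=
  b (fst p) (snd p) * Cmod2 (Csub (u (fst p)) (u (snd p))).
Definition E2 {V} (c : V -> R) (u : V -> Cpx) (x : V) : R := c x * Cmod2 (u x).
Definition E3 {V} (m : V -> R) (u : V -> Cpx) (x : V) : R := Cmod2 (u x) * m x.

Lemma in_DN_iff {V} (m : V -> R) b c u : in_DN m b c u <->
  nn_summable (E3 m u) /\ nn_summable (E1 b u) /\ nn_summable (E2 c u).
Proof. reflexivity. Qed.
Lemma DN_parts {V} (m : V -> R) b c u : in_DN m b c u ->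
  nn_summable (E3 m u) /\ nn_summable (E1 b u) /\ nn_summable (E2 c u).
Proof. intros H; exact H. Qed.
Lemma QN_norm2_eq {V} (m : V -> R) b c u :
  QN_norm2 m b c u = / 2 * nnsum (E1 b u) + nnsum (E2 c u) + nnsum (E3 m u).
Proof. reflexivity. Qed.

Lemma nn_lin {T} (f g : T -> R) al be : 0 <= al -> 0 <= be -> (forall x, 0 <= f x) -> (forall x, 0 <= g x) ->
  nn_summable f -> nn_summable g ->
  nn_summable (fun x => al * f x + be * g x) /\ nnsum (fun x => al * f x + be * g x) = al * nnsum f + be * nnsum g.
Proof.
  intros Ha Hb Hf Hg Sf Sg. destruct (nnsum_scal f al Ha Sf) as [S1 E1']. destruct (nnsum_scal g be Hb Sg) as [S2 E2'].
  destruct (nnsum_plus _ _ (fun x => Rmult_le_pos _ _ Ha (Hf x)) (fun x => Rmult_le_pos _ _ Hb (Hg x)) S1 S2) as [S3 E3'].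
  split; auto. rewrite E3', E1', E2'; auto.
Qed.

Section dummy. End dummy.

Lemma graph_b_nonneg {V} (m : V -> R) b c : is_graph m b c -> forall x y, 0 <= b x y.
Proof. intros Hg; apply Hg. Qed.
Lemma graph_c_nonneg {V} (m : V -> R) b c : is_graph m b c -> forall x, 0 <= c x.
Proof. intros Hg; apply Hg. Qed.
Lemma graph_m_pos {V} (m : V -> R) b c : is_graph m b c -> forall x, 0 < m x.
Proof. intros Hg; apply Hg. Qed.
Lemma graph_b_sym {V} (m : V -> R) b c : is_graph m b c -> forall x y, b x y = b y x.
Proof. intros Hg; apply Hg. Qed.
Lemma graph_b_diag {V} (m : V -> R) b c : is_graph m b c -> forall x, b x x = 0.
Proof. intros Hg; apply Hg. Qed.

Lemma E1_nonneg {V} (m : V -> R) b c (Hg : is_graph m b c) u p : 0 <= E1 b u p.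
Proof. unfold E1. apply Rmult_le_pos; [apply (graph_b_nonneg m b c Hg)|apply Cmod2_nonneg]. Qed.
Lemma E2_nonneg {V} (m : V -> R) b c (Hg : is_graph m b c) u x : 0 <= E2 c u x.
Proof. unfold E2. apply Rmult_le_pos; [apply (graph_c_nonneg m b c Hg)|apply Cmod2_nonneg]. Qed.
Lemma E3_nonneg {V} (m : V -> R) b c (Hg : is_graph m b c) u x : 0 <= E3 m u x.
Proof. unfold E3. apply Rmult_le_pos; [apply Cmod2_nonneg|apply Rlt_le, (graph_m_pos m b c Hg)]. Qed.

Lemma QN_nonneg {V} (m : V -> R) b c (Hg : is_graph m b c) u : in_DN m b c u -> 0 <= QN_norm2 m b c u.
Proof. intros H; destruct (DN_parts _ _ _ _ H) as [S3 [S1 S2]]. rewrite QN_norm2_eq.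
  pose proof (nnsum_nonneg _ S1); pose proof (nnsum_nonneg _ S2); pose proof (nnsum_nonneg _ S3). lra. Qed.

Lemma QN_le {V} (m : V -> R) b c (Hg : is_graph m b c) (u v w : V -> Cpx) al be :
  in_DN m b c u -> in_DN m b c v -> 0 <= al -> 0 <= be ->
  (forall x y, Cmod2 (Csub (w x) (w y)) <= al * Cmod2 (Csub (u x) (u y)) + be * Cmod2 (Csub (v x) (v y))) ->
  (forall x, Cmod2 (w x) <= al * Cmod2 (u x) + be * Cmod2 (v x)) ->
  in_DN m b c w /\ QN_norm2 m b c w <= al * QN_norm2 m b c u + be * QN_norm2 m b c v.
Proof.
  intros [U3 [U1 U2]] [V3 [V1 V2]] Ha Hb HD HP.
  destruct (nn_lin _ _ al be Ha Hb (E1_nonneg m b c Hg u) (E1_nonneg m b c Hg v) U1 V1) as [S1 Q1].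
  destruct (nn_lin _ _ al be Ha Hb (E2_nonneg m b c Hg u) (E2_nonneg m b c Hg v) U2 V2) as [S2 Q2].
  destruct (nn_lin _ _ al be Ha Hb (E3_nonneg m b c Hg u) (E3_nonneg m b c Hg v) U3 V3) as [S3 Q3].
  assert (P1 : forall p, E1 b w p <= al * E1 b u p + be * E1 b v p).
  { intros p; unfold E1. pose proof (graph_b_nonneg m b c Hg (fst p) (snd p)). specialize (HD (fst p) (snd p)).
    apply Rle_trans with (b (fst p) (snd p) * (al * Cmod2 (Csub (u (fst p)) (u (snd p))) + be * Cmod2 (Csub (v (fst p)) (v (snd p))))).
    - apply Rmult_le_compat_l; auto. - lra. }
  assert (P2 : forall x, E2 c w x <= al * E2 c u x + be * E2 c v x).
  { intros x; unfold E2. pose proof (graph_c_nonneg m b c Hg x). specialize (HP x).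
    apply Rle_trans with (c x * (al * Cmod2 (u x) + be * Cmod2 (v x))). - apply Rmult_le_compat_l; auto. - lra. }
  assert (P3 : forall x, E3 m w x <= al * E3 m u x + be * E3 m v x).
  { intros x; unfold E3. pose proof (graph_m_pos m b c Hg x). specialize (HP x).
    apply Rle_trans with ((al * Cmod2 (u x) + be * Cmod2 (v x)) * m x). - apply Rmult_le_compat_r; lra. - lra. }
  destruct (nnsum_mono _ _ S1 P1) as [W1 L1]. destruct (nnsum_mono _ _ S2 P2) as [W2 L2].
  destruct (nnsum_mono _ _ S3 P3) as [W3 L3].
  split; [split; [|split]; auto|]. rewrite !QN_norm2_eq. rewrite Q1, Q2, Q3 in *. lra.
Qed.

Lemma QN_eq {V} (m : V -> R) b c (Hg : is_graph m b c) (u v w1 w2 : V -> Cpx) al be :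
  in_DN m b c u -> in_DN m b c v -> in_DN m b c w1 -> in_DN m b c w2 -> 0 <= al -> 0 <= be ->
  (forall x y, Cmod2 (Csub (w1 x) (w1 y)) + Cmod2 (Csub (w2 x) (w2 y)) = al * Cmod2 (Csub (u x) (u y)) + be * Cmod2 (Csub (v x) (v y))) ->
  (forall x, Cmod2 (w1 x) + Cmod2 (w2 x) = al * Cmod2 (u x) + be * Cmod2 (v x)) ->
  QN_norm2 m b c w1 + QN_norm2 m b c w2 = al * QN_norm2 m b c u + be * QN_norm2 m b c v.
Proof.
  intros [U3 [U1 U2]] [V3 [V1 V2]] [A3 [A1 A2]] [B3 [B1 B2]] Ha Hb HD HP.
  destruct (nn_lin _ _ al be Ha Hb (E1_nonneg m b c Hg u) (E1_nonneg m b c Hg v) U1 V1) as [S1 Q1].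
  destruct (nn_lin _ _ al be Ha Hb (E2_nonneg m b c Hg u) (E2_nonneg m b c Hg v) U2 V2) as [S2 Q2].
  destruct (nn_lin _ _ al be Ha Hb (E3_nonneg m b c Hg u) (E3_nonneg m b c Hg v) U3 V3) as [S3 Q3].
  destruct (nn_lin _ _ 1 1 ltac:(lra) ltac:(lra) (E1_nonneg m b c Hg w1) (E1_nonneg m b c Hg w2) A1 B1) as [T1 R1].
  destruct (nn_lin _ _ 1 1 ltac:(lra) ltac:(lra) (E2_nonneg m b c Hg w1) (E2_nonneg m b c Hg w2) A2 B2) as [T2 R2].
  destruct (nn_lin _ _ 1 1 ltac:(lra) ltac:(lra) (E3_nonneg m b c Hg w1) (E3_nonneg m b c Hg w2) A3 B3) as [T3 R3].
  rewrite (nnsum_ext _ (fun x => al * E1 b u x + be * E1 b v x)) in R1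
    by (intros p; unfold E1; specialize (HD (fst p) (snd p)); rewrite <- (Rmult_1_l (b _ _ * _)); nra).
  rewrite (nnsum_ext _ (fun x => al * E2 c u x + be * E2 c v x)) in R2
    by (intros x; unfold E2; specialize (HP x); nra).
  rewrite (nnsum_ext _ (fun x => al * E3 m u x + be * E3 m v x)) in R3
    by (intros x; unfold E3; specialize (HP x); nra).
  rewrite !QN_norm2_eq. lra.
Qed.

Lemma DN_ext {V} (m : V -> R) b c u v : (forall x, u x = v x) -> in_DN m b c u -> in_DN m b c v.
Proof. intros H. replace v with u; auto. apply functional_extensionality; auto. Qed.
Lemma QN_ext {V} (m : V -> R) b c u v : (forall x, u x = v x) -> QN_norm2 m b c u = QN_norm2 m b c v.
Proof. intros H. replace v with u; auto. apply functional_extensionality; auto. Qed.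

Lemma DN_zero {V} (m : V -> R) b c : in_DN m b c (fun _ => C0) /\ QN_norm2 m b c (fun _ => C0) = 0.
Proof.
  destruct (@nn_summable_zero V) as [Z1 Z2]. destruct (@nn_summable_zero (V * V)) as [Y1 Y2].
  assert (H3 : forall x, E3 m (fun _ => C0) x = 0) by (intros; unfold E3; rewrite Cmod2_C0; ring).
  assert (H2 : forall x, E2 c (fun _ => C0) x = 0) by (intros; unfold E2; rewrite Cmod2_C0; ring).
  assert (H1 : forall x, E1 b (fun _ => C0) x = 0) by (intros; unfold E1; rewrite Csub_self, Cmod2_C0; ring).
  split.
  - split; [|split].
    + change (nn_summable (E3 m (fun _ : V => C0))). apply (nn_summable_ext (fun _ : V => 0)); [intros; rewrite H3; auto|exact Z1].
    + change (nn_summable (E1 b (fun _ : V => C0))). apply (nn_summable_ext (fun _ : V * V => 0)); [intros; rewrite H1; auto|exact Y1].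
    + change (nn_summable (E2 c (fun _ : V => C0))). apply (nn_summable_ext (fun _ : V => 0)); [intros; rewrite H2; auto|exact Z1].
  - rewrite QN_norm2_eq, (nnsum_ext _ _ H1), (nnsum_ext _ _ H2), (nnsum_ext _ _ H3), Z2, Y2. ring.
Qed.

Lemma DN_comb {V} (m : V -> R) b c (Hg : is_graph m b c) u v al be :
  in_DN m b c u -> in_DN m b c v -> in_DN m b c (fun x => Cadd (Cmul al (u x)) (Cmul be (v x))).
Proof.
  intros Hu Hv. apply (QN_le m b c Hg u v _ (2 * Cmod2 al) (2 * Cmod2 be)); auto.
  - pose proof (Cmod2_nonneg al); lra.
  - pose proof (Cmod2_nonneg be); lra.
  - intros x y. rewrite Csub_Cadd, !Csub_Cmul. eapply Rle_trans; [apply (Cmod2_add_le _ _ 1); lra|].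
    rewrite !Cmod2_mul. replace (1 + / 1) with 2 by (rewrite Rinv_1; ring). lra.
  - intros x. eapply Rle_trans; [apply (Cmod2_add_le _ _ 1); lra|].
    rewrite !Cmod2_mul. replace (1 + / 1) with 2 by (rewrite Rinv_1; ring). lra.
Qed.

Lemma DN_add {V} (m : V -> R) b c (Hg : is_graph m b c) u v :
  in_DN m b c u -> in_DN m b c v -> in_DN m b c (fun x => Cadd (u x) (v x)).
Proof. intros Hu Hv. eapply DN_ext; [|apply (DN_comb m b c Hg u v (1,0) (1,0) Hu Hv)].
  intros x; cbv beta; destruct (u x), (v x); unfold Cadd, Cmul; simpl; f_equal; ring. Qed.

Lemma DN_sub {V} (m : V -> R) b c (Hg : is_graph m b c) u v :
  in_DN m b c u -> in_DN m b c v -> in_DN m b c (fsub u v).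
Proof. intros Hu Hv. eapply DN_ext; [|apply (DN_comb m b c Hg u v (1,0) (-1,0) Hu Hv)].
  intros x; cbv beta; unfold fsub; destruct (u x), (v x); unfold Csub, Copp, Cadd, Cmul; simpl; f_equal; ring. Qed.

Lemma DN_scal {V} (m : V -> R) b c (Hg : is_graph m b c) u al :
  in_DN m b c u -> in_DN m b c (fun x => Cmul al (u x)) /\ QN_norm2 m b c (fun x => Cmul al (u x)) = Cmod2 al * QN_norm2 m b c u.
Proof.
  intros Hu. destruct (DN_zero m b c) as [Z1 Z2].
  assert (H : in_DN m b c (fun x => Cmul al (u x))).
  { eapply DN_ext; [|apply (DN_comb m b c Hg u u al (0,0) Hu Hu)].
    intros x; cbv beta; destruct (u x), al; unfold Cadd, Cmul; simpl; f_equal; ring. }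
  split; auto.
  assert (HH : QN_norm2 m b c (fun x => Cmul al (u x)) + QN_norm2 m b c (fun _ => C0) = Cmod2 al * QN_norm2 m b c u + 0 * QN_norm2 m b c u).
  { apply (QN_eq m b c Hg u u _ _ (Cmod2 al) 0 Hu Hu H Z1 (Cmod2_nonneg al) (Rle_refl 0)).
    - intros x y. rewrite Csub_Cmul, Cmod2_mul, Csub_self, Cmod2_C0. ring.
    - intros x. rewrite Cmod2_mul, Cmod2_C0. ring. }
  rewrite Z2 in HH. lra.
Qed.

Lemma sqrt_comb_bound X A B : 0 <= A -> 0 <= B ->
  (forall t, t > 0 -> X <= (1 + t) * A + (1 + / t) * B) -> X <= (sqrt A + sqrt B) * (sqrt A + sqrt B).
Proof.
  intros HA HB H. pose proof (sqrt_sqrt A HA); pose proof (sqrt_sqrt B HB).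
  pose proof (sqrt_pos A); pose proof (sqrt_pos B).
  destruct (Req_dec A 0) as [A0|A0].
  - subst A. rewrite sqrt_0. apply le_of_eps; intros e He.
    destruct (Req_dec B 0) as [B0|B0].
    + subst B. specialize (H 1 ltac:(lra)). lra.
    + specialize (H (2 * B / e)). assert (2 * B / e > 0) by (apply Rdiv_lt_0_compat; lra).
      specialize (H H4). replace (/ (2 * B / e)) with (e / (2 * B)) in H by (field; lra).
      replace ((1 + e / (2 * B)) * B) with (B + e / 2) in H by (field; lra). nra.
  - destruct (Req_dec B 0) as [B0|B0].
    + subst B. rewrite sqrt_0. apply le_of_eps; intros e He.
      specialize (H (e / (2 * A))). assert (e / (2 * A) > 0) by (apply Rdiv_lt_0_compat; lra).
      specialize (H H4). replace ((1 + e / (2 * A)) * A) with (A + e / 2) in H by (field; lra). nra.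
    + assert (sqrt A > 0). { destruct H2; auto. exfalso; apply A0. rewrite <- H0, <- H2; ring. }
      assert (sqrt B > 0). { destruct H3; auto. exfalso; apply B0. rewrite <- H1, <- H3; ring. }
      specialize (H (sqrt B / sqrt A) ltac:(apply Rdiv_lt_0_compat; lra)).
      replace (/ (sqrt B / sqrt A)) with (sqrt A / sqrt B) in H by (field; lra).
      replace ((1 + sqrt B / sqrt A) * A + (1 + sqrt A / sqrt B) * B)
        with ((sqrt A + sqrt B) * (sqrt A + sqrt B)) in H; auto.
      assert (forall a bb, a > 0 -> bb > 0 -> (a + bb) * (a + bb) = (1 + bb / a) * (a * a) + (1 + a / bb) * (bb * bb))
        by (intros; field; lra).
      rewrite H6, H0, H1; auto.
Qed.


Lemma Cmod2_Copp z : Cmod2 (Copp z) = Cmod2 z.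
Proof. destruct z; unfold Cmod2, Copp, Rsqr; simpl; ring. Qed.
Lemma Csub_fsub_diff a b c d : Csub (Csub a b) (Csub c d) = Cadd (Csub a c) (Copp (Csub b d)).
Proof. destruct a, b, c, d; unfold Csub, Cadd, Copp; simpl; f_equal; ring. Qed.

Lemma QN_sub_le {V} (m : V -> R) b c (Hg : is_graph m b c) u v t : in_DN m b c u -> in_DN m b c v -> t > 0 ->
  QN_norm2 m b c (fsub u v) <= (1 + t) * QN_norm2 m b c u + (1 + / t) * QN_norm2 m b c v.
Proof.
  intros Hu Hv Ht. apply (QN_le m b c Hg u v _ (1 + t) (1 + / t)); auto.
  - lra. - pose proof (Rinv_0_lt_compat t Ht); lra.
  - intros x y. unfold fsub. rewrite Csub_fsub_diff. rewrite <- (Cmod2_Copp (Csub (v x) (v y))). apply Cmod2_add_le; auto.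
  - intros x. unfold fsub, Csub. rewrite <- (Cmod2_Copp (v x)). apply Cmod2_add_le; auto.
Qed.

Lemma QN_add_le {V} (m : V -> R) b c (Hg : is_graph m b c) u v t : in_DN m b c u -> in_DN m b c v -> t > 0 ->
  QN_norm2 m b c (fun x => Cadd (u x) (v x)) <= (1 + t) * QN_norm2 m b c u + (1 + / t) * QN_norm2 m b c v.
Proof.
  intros Hu Hv Ht. apply (QN_le m b c Hg u v _ (1 + t) (1 + / t)); auto.
  - lra. - pose proof (Rinv_0_lt_compat t Ht); lra.
  - intros x y. rewrite Csub_Cadd. apply Cmod2_add_le; auto.
  - intros x. apply Cmod2_add_le; auto.
Qed.

Definition NQ {V} (m : V -> R) b c (u : V -> Cpx) := sqrt (QN_norm2 m b c u).

Lemma NQ_nonneg {V} (m : V -> R) b c u : 0 <= NQ m b c u.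
Proof. apply sqrt_pos. Qed.
Lemma NQ_sq {V} (m : V -> R) b c (Hg : is_graph m b c) u : in_DN m b c u -> NQ m b c u * NQ m b c u = QN_norm2 m b c u.
Proof. intros H. apply sqrt_sqrt, QN_nonneg; auto. Qed.

Lemma sqrt_le_of_sq X a : 0 <= a -> X <= a * a -> sqrt X <= a.
Proof. intros Ha H. rewrite <- (sqrt_square a Ha). apply sqrt_le_1_alt; auto. Qed.

Lemma NQ_sub_le {V} (m : V -> R) b c (Hg : is_graph m b c) u v : in_DN m b c u -> in_DN m b c v ->
  NQ m b c (fsub u v) <= NQ m b c u + NQ m b c v.
Proof.
  intros Hu Hv. apply sqrt_le_of_sq. - pose proof (NQ_nonneg m b c u); pose proof (NQ_nonneg m b c v); lra.
  - apply sqrt_comb_bound; try (apply QN_nonneg; auto). intros; apply QN_sub_le; auto.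
Qed.

Lemma NQ_add_le {V} (m : V -> R) b c (Hg : is_graph m b c) u v : in_DN m b c u -> in_DN m b c v ->
  NQ m b c (fun x => Cadd (u x) (v x)) <= NQ m b c u + NQ m b c v.
Proof.
  intros Hu Hv. apply sqrt_le_of_sq. - pose proof (NQ_nonneg m b c u); pose proof (NQ_nonneg m b c v); lra.
  - apply sqrt_comb_bound; try (apply QN_nonneg; auto). intros; apply QN_add_le; auto.
Qed.

Lemma QN_pt {V} (m : V -> R) b c (Hg : is_graph m b c) u x : in_DN m b c u -> Cmod2 (u x) * m x <= QN_norm2 m b c u.
Proof.
  intros H. destruct (DN_parts _ _ _ _ H) as [S3 [S1 S2]]. rewrite QN_norm2_eq.
  pose proof (nnsum_nonneg _ S1); pose proof (nnsum_nonneg _ S2).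
  pose proof (nnsum_ge _ [x] S3 ltac:(constructor; [simpl; tauto|constructor])). rewrite fin_sum_cons, fin_sum_nil in H2. unfold E3 at 1 in H2. lra.
Qed.

Lemma QN_edge {V} (m : V -> R) b c (Hg : is_graph m b c) u x y : in_DN m b c u ->
  b x y * Cmod2 (Csub (u x) (u y)) <= QN_norm2 m b c u.
Proof.
  intros H. destruct (DN_parts _ _ _ _ H) as [S3 [S1 S2]]. rewrite QN_norm2_eq.
  pose proof (nnsum_nonneg _ S3); pose proof (nnsum_nonneg _ S2).
  destruct (classic (x = y)) as [->|Hne].
  - rewrite (graph_b_diag m b c Hg). pose proof (nnsum_nonneg _ S1). lra.
  - assert (Hnd : NoDup [(x, y); (y, x)]).
    { constructor; [simpl; intros [Heq|[]]; inversion Heq; congruence|constructor; [simpl; tauto|constructor]]. }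
    pose proof (nnsum_ge _ _ S1 Hnd). rewrite !fin_sum_cons, fin_sum_nil in H2. unfold E1 at 1 2 in H2; simpl fst in H2; simpl snd in H2.
    rewrite (graph_b_sym m b c Hg y x), (Cmod2_sub_sym (u y)) in H2. lra.
Qed.

Lemma DN_lip {V} (m : V -> R) b c (Hg : is_graph m b c) (Hc : connected b) u x y : in_DN m b c u ->
  Cnorm (Csub (u x) (u y)) <= NQ m b c u * dist b x y.
Proof.
  intros H. apply lip_dist; auto. apply NQ_nonneg.
  intros x' y' Hb. pose proof (QN_edge m b c Hg u x' y' H).
  rewrite Cnorm_sqrt. unfold NQ. rewrite <- sqrt_inv, <- sqrt_mult_alt by (apply QN_nonneg; auto).
  apply sqrt_le_1_alt. apply (Rmult_le_reg_l (b x' y')); auto.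
  replace (b x' y' * (QN_norm2 m b c u * / b x' y')) with (QN_norm2 m b c u) by (field; lra). lra.
Qed.

Lemma DN_val {V} (m : V -> R) b c (Hg : is_graph m b c) u x : in_DN m b c u ->
  Cnorm (u x) <= NQ m b c u * / sqrt (m x).
Proof.
  intros H. pose proof (QN_pt m b c Hg u x H). pose proof (graph_m_pos m b c Hg x).
  rewrite Cnorm_sqrt. unfold NQ. rewrite <- sqrt_inv, <- sqrt_mult_alt by (apply QN_nonneg; auto).
  apply sqrt_le_1_alt. apply (Rmult_le_reg_r (m x)); auto.
  replace (QN_norm2 m b c u * / m x * m x) with (QN_norm2 m b c u) by (field; lra). lra.
Qed.

Lemma Cnorm_Csub_C0 z : Cnorm (Csub z C0) = Cnorm z.
Proof. rewrite Csub_C0; auto. Qed.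

Lemma DN_val2 {V} (m : V -> R) b c (Hg : is_graph m b c) (Hc : connected b) u x y : in_DN m b c u ->
  Cnorm (u y) <= NQ m b c u * (/ sqrt (m x) + dist b x y).
Proof.
  intros H. pose proof (DN_val m b c Hg u x H). pose proof (DN_lip m b c Hg Hc u x y H).
  pose proof (Cnorm_sub_triang (u y) (u x) C0). rewrite !Cnorm_Csub_C0, Cnorm_sub_sym in H2. nra.
Qed.

Definition ind (P : Prop) : R := if dec P then 1 else 0.
Lemma ind_nonneg P : 0 <= ind P.
Proof. unfold ind; destruct (dec P); lra. Qed.

Lemma deg_fiber1 {V} (m : V -> R) b c (Hg : is_graph m b c) x0 :
  nn_summable (fun p : V * V => ind (fst p = x0) * b (fst p) (snd p)).
Proof.
  destruct Hg as [Hm [Hc' [Hb [Hd [Hs Hsum]]]]].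
  apply (nn_reindex _ (fun y => (x0, y)) snd (fun p => fst p = x0)); simpl; auto.
  - intros [p1 p2]; simpl; intros ->; auto.
  - intros p Hp. unfold ind. rewrite (decF' Hp). ring.
  - intros p. apply Rmult_le_pos; [apply ind_nonneg|auto].
  - apply (nn_summable_ext (b x0)); auto. intros y. unfold ind. rewrite (decT' (eq_refl x0)). ring.
Qed.

Lemma deg_fiber2 {V} (m : V -> R) b c (Hg : is_graph m b c) x0 :
  nn_summable (fun p : V * V => ind (snd p = x0) * b (fst p) (snd p)).
Proof.
  destruct Hg as [Hm [Hc' [Hb [Hd [Hs Hsum]]]]].
  apply (nn_reindex _ (fun y => (y, x0)) fst (fun p => snd p = x0)); simpl; auto.
  - intros [p1 p2]; simpl; intros ->; auto.
  - intros p Hp. unfold ind. rewrite (decF' Hp). ring.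
  - intros p. apply Rmult_le_pos; [apply ind_nonneg|auto].
  - apply (nn_summable_ext (b x0)); auto. intros y. unfold ind. rewrite (decT' (eq_refl x0)). rewrite Hs; ring.
Qed.

Definition cind {V} (x0 : V) (z : Cpx) : V -> Cpx := fun x => if dec (x = x0) then z else C0.

Lemma Cmod2_cind {V} (x0 x : V) z : Cmod2 (cind x0 z x) = ind (x = x0) * Cmod2 z.
Proof. unfold cind, ind. destruct (dec (x = x0)); [ring|rewrite Cmod2_C0; ring]. Qed.

Lemma DN_cind {V} (m : V -> R) b c (Hg : is_graph m b c) x0 z : in_DN m b c (cind x0 z).
Proof.
  split; [|split].
  - change (nn_summable (E3 m (cind x0 z))). apply (nn_summable_supp _ [x0]).
    + intros; apply (E3_nonneg m b c Hg).
    + intros x Hx. unfold E3, cind. rewrite (decF' (P := x = x0)); [rewrite Cmod2_C0; ring|]. intros ->; apply Hx; left; auto.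
  - change (nn_summable (E1 b (cind x0 z))).
    destruct (nn_lin _ _ (2 * Cmod2 z) (2 * Cmod2 z) ltac:(pose proof (Cmod2_nonneg z); lra) ltac:(pose proof (Cmod2_nonneg z); lra)
      (fun p => Rmult_le_pos _ _ (ind_nonneg _) (graph_b_nonneg m b c Hg _ _))
      (fun p => Rmult_le_pos _ _ (ind_nonneg _) (graph_b_nonneg m b c Hg _ _))
      (deg_fiber1 m b c Hg x0) (deg_fiber2 m b c Hg x0)) as [S _].
    apply (nn_summable_mono _ _ S). intros p. unfold E1.
    pose proof (Cmod2_add_le (cind x0 z (fst p)) (Copp (cind x0 z (snd p))) 1 ltac:(lra)).
    rewrite Cmod2_Copp, !Cmod2_cind in H. replace (1 + / 1) with 2 in H by (rewrite Rinv_1; ring).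
    pose proof (graph_b_nonneg m b c Hg (fst p) (snd p)).
    unfold Csub. apply Rle_trans with (b (fst p) (snd p) * ((1 + 1) * (ind (fst p = x0) * Cmod2 z) + 2 * (ind (snd p = x0) * Cmod2 z))).
    + apply Rmult_le_compat_l; auto.
    + lra.
  - change (nn_summable (E2 c (cind x0 z))). apply (nn_summable_supp _ [x0]).
    + intros; apply (E2_nonneg m b c Hg).
    + intros x Hx. unfold E2, cind. rewrite (decF' (P := x = x0)); [rewrite Cmod2_C0; ring|]. intros ->; apply Hx; left; auto.
Qed.

Lemma DN_finsupp {V} (m : V -> R) b c (Hg : is_graph m b c) : forall l u, (forall x, ~ In x l -> u x = C0) -> in_DN m b c u.
Proof.
  intros l; induction l as [|a l IH]; intros u Hu.
  - eapply DN_ext; [|apply (DN_zero m b c)]. intros x; symmetry; apply Hu; simpl; auto.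
  - set (u' := fun x => if dec (x = a) then C0 else u x).
    assert (Hu' : in_DN m b c u').
    { apply IH. intros x Hx. unfold u'. destruct (dec (x = a)) eqn:E; auto. apply Hu. simpl. intros [H|H]; auto.
      apply (decF1 E); auto. }
    eapply DN_ext; [|apply (DN_add m b c Hg _ _ (DN_cind m b c Hg a (u a)) Hu')].
    intros x; cbv beta. unfold u', cind. destruct (dec (x = a)) eqn:E.
    + apply decT in E; subst. destruct (u a); unfold Cadd, C0; simpl; f_equal; ring.
    + destruct (u x); unfold Cadd, C0; simpl; f_equal; ring.
Qed.

Lemma DN_fin_supp {V} (m : V -> R) b c (Hg : is_graph m b c) u : fin_supp u -> in_DN m b c u.
Proof. intros [l Hl]. apply (DN_finsupp m b c Hg l); auto. Qed.

Lemma bval_spec {V} (m : V -> R) b c (Hg : is_graph m b c) (Hc : connected b) u s :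
  in_DN m b c u -> cauchy b s -> C_cv (fun n => u (s n)) (bval u s).
Proof.
  intros Hu Hs. unfold bval. apply epsilon_spec. apply C_cauchy_cv.
  intros e He. pose proof (NQ_nonneg m b c u).
  destruct (Hs (e / (NQ m b c u + 1))) as [N HN]; [apply Rdiv_lt_0_compat; lra|].
  exists N; intros n k Hn Hk. eapply Rle_lt_trans; [apply (DN_lip m b c Hg Hc u); auto|].
  specialize (HN n k Hn Hk). pose proof (dist_nonneg b Hc (s n) (s k)).
  apply Rle_lt_trans with ((NQ m b c u + 1) * dist b (s n) (s k)); [nra|].
  apply (Rmult_lt_compat_l (NQ m b c u + 1)) in HN; [|lra]. field_simplify in HN; lra.
Qed.

Lemma C_cv_sub s t a c : C_cv s a -> C_cv t c -> C_cv (fun n => Csub (s n) (t n)) (Csub a c).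
Proof.
  intros Hs Ht. pose proof (C_cv_lin s t a c (1,0) (-1,0) Hs Ht) as H.
  replace (Csub a c) with (Cadd (Cmul (1, 0) a) (Cmul (-1, 0) c)).
  - eapply C_cv_ext; [|exact H]. intros n; cbv beta. destruct (s n), (t n); unfold Csub, Cadd, Copp, Cmul; simpl; f_equal; ring.
  - destruct a, c; unfold Csub, Cadd, Copp, Cmul; simpl; f_equal; ring.
Qed.

Lemma C_cv_norm_le s z K : C_cv s z -> (forall n, Cnorm (s n) <= K) -> Cnorm z <= K.
Proof.
  intros H HK. apply le_of_eps; intros e He. destruct (H e He) as [N HN]. specialize (HN N (le_n _)).
  pose proof (Cnorm_sub_triang z (s N) C0). rewrite !Cnorm_Csub_C0, Cnorm_sub_sym in H0. specialize (HK N). lra.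
Qed.

Lemma C_cv_norm_le_ev s z K N : C_cv s z -> (forall n, (N <= n)%nat -> Cnorm (s n) <= K) -> Cnorm z <= K.
Proof.
  intros H HK. apply le_of_eps; intros e He. destruct (H e He) as [N1 HN]. specialize (HN (max N N1) ltac:(lia)).
  pose proof (Cnorm_sub_triang z (s (max N N1)) C0). rewrite !Cnorm_Csub_C0, Cnorm_sub_sym in H0.
  specialize (HK (max N N1) ltac:(lia)). lra.
Qed.

Lemma part1 {V} (m : V -> R) b c (Hg : is_graph m b c) (Hc : connected b) :
  forall u, in_DD m b c u -> forall s, Vinf_pt b s -> C_cv (fun n => u (s n)) C0.
Proof.
  intros u [Hu HD] s Hv. pose proof Hv as [Hs _].
  destruct (dist_sym_le_cauchy b Hc s Hs) as [N0 HN0]. set (x0 := s N0).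
  set (K := / sqrt (m x0) + 1). assert (HK : K > 0) by (unfold K; pose proof (inv_sqrt_nonneg (m x0)); lra).
  intros e He. destruct (HD ((e / K) * (e / K))) as [phi [[l Hl] Hphi]].
  { assert (e / K > 0) by (apply Rdiv_lt_0_compat; lra). nra. }
  destruct (vinf_avoid b Hc s l Hv) as [N1 HN1].
  exists (max N0 N1). intros n Hn. rewrite Cnorm_Csub_C0.
  assert (Hp : in_DN m b c phi) by (apply (DN_fin_supp m b c Hg); exists l; auto).
  assert (Hw : in_DN m b c (fsub u phi)) by (apply (DN_sub m b c Hg); auto).
  assert (E : u (s n) = fsub u phi (s n)) by (unfold fsub; rewrite (Hl (s n)); [rewrite Csub_C0; auto|apply HN1; lia]).
  rewrite E. eapply Rle_lt_trans; [apply (DN_val2 m b c Hg Hc _ x0); auto|].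
  assert (NQ m b c (fsub u phi) < e / K).
  { unfold NQ. rewrite <- (sqrt_square (e/K)) by (apply Rlt_le, Rdiv_lt_0_compat; lra). apply sqrt_lt_1_alt. split; auto. apply QN_nonneg; auto. }
  specialize (HN0 n ltac:(lia)). pose proof (NQ_nonneg m b c (fsub u phi)).
  pose proof (dist_nonneg b Hc x0 (s n)).
  apply Rle_lt_trans with (NQ m b c (fsub u phi) * K).
  - apply Rmult_le_compat_l; auto. unfold K; fold x0 in HN0; lra.
  - apply (Rmult_lt_compat_r K) in H; auto. field_simplify in H; lra.
Qed.

Lemma bval_DD {V} (m : V -> R) b c (Hg : is_graph m b c) (Hc : connected b) u s :
  in_DD m b c u -> Vinf_pt b s -> bval u s = C0.
Proof. intros Hu Hs. apply (C_cv_unique (fun n => u (s n))); [apply (bval_spec m b c); auto; [apply Hu|apply Hs]|].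
  apply (part1 m b c Hg Hc); auto. Qed.

Lemma part2 {V} (m : V -> R) b c (Hg : is_graph m b c) (Hc : connected b) :
  forall (u v : V -> Cpx) (al be : Cpx), in_DN m b c u -> in_DN m b c v ->
     forall s, Vinf_pt b s ->
       bval (fun x => Cadd (Cmul al (u x)) (Cmul be (v x))) s
       = Cadd (Cmul al (bval u s)) (Cmul be (bval v s)).
Proof.
  intros u v al be Hu Hv s [Hs _].
  apply (C_cv_unique (fun n => Cadd (Cmul al (u (s n))) (Cmul be (v (s n))))).
  - apply (bval_spec m b c Hg Hc (fun x => Cadd (Cmul al (u x)) (Cmul be (v x)))); auto. apply (DN_comb m b c Hg); auto.
  - apply C_cv_lin; apply (bval_spec m b c); auto.
Qed.

Lemma bval_bound {V} (m : V -> R) b c (Hg : is_graph m b c) (Hc : connected b) s :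
  cauchy b s -> exists K, K > 0 /\ forall v t, in_DN m b c v -> cauchy b t -> dhat b s t < 1 ->
    Cnorm (bval v t) <= NQ m b c v * K.
Proof.
  intros Hs. destruct (dist_sym_le_cauchy b Hc s Hs) as [N0 HN0]. set (x0 := s N0).
  exists (/ sqrt (m x0) + 3). split; [pose proof (inv_sqrt_nonneg (m x0)); lra|].
  intros v t Hv Ht Hd.
  pose proof (dhat_spec b Hc s t Hs Ht) as Hdh. destruct (Hdh (1 - dhat b s t)) as [N1 HN1]; [lra|].
  apply (C_cv_norm_le_ev (fun n => v (t n)) _ _ (max N0 N1)); [apply (bval_spec m b c); auto|].
  intros n Hn. eapply Rle_trans; [apply (DN_val2 m b c Hg Hc v x0); auto|].
  apply Rmult_le_compat_l; [apply NQ_nonneg|].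
  specialize (HN0 n ltac:(lia)). specialize (HN1 n ltac:(lia)). unfold R_dist in HN1.
  apply Rabs_def2 in HN1. pose proof (dist_triangle b Hc x0 (s n) (t n)). fold x0 in HN0. lra.
Qed.

Lemma part3 {V} (m : V -> R) b c (Hg : is_graph m b c) (Hc : connected b) :
  forall (un : nat -> V -> Cpx) (u : V -> Cpx),
     (forall n, in_DN m b c (un n)) -> in_DN m b c u ->
     (exists wn : nat -> V -> Cpx, (forall n, in_DD m b c (wn n)) /\
        Un_cv (fun n => QN_norm2 m b c (fsub (fsub (un n) u) (wn n))) 0) ->
     forall s, Vinf_pt b s -> exists r, r > 0 /\
       forall eps, eps > 0 -> exists N, forall n, (N <= n)%nat ->
         forall t, Vinf_pt b t -> dhat b s t < r ->
           Cnorm (Csub (bval (un n) t) (bval u t)) <= eps.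
Proof.
  intros un u Hun Hu [wn [Hwn Hcv]] s [Hs _].
  destruct (bval_bound m b c Hg Hc s Hs) as [K [HK HB]].
  exists 1; split; [lra|]. intros eps He.
  destruct (Hcv ((eps / K) * (eps / K))) as [N HN].
  { assert (eps / K > 0) by (apply Rdiv_lt_0_compat; lra). nra. }
  exists N. intros n Hn t Ht Hd.
  set (v := fsub (fsub (un n) u) (wn n)).
  assert (Hv : in_DN m b c v) by (apply (DN_sub m b c Hg); [apply (DN_sub m b c Hg); auto|apply Hwn]).
  assert (E : bval v t = Csub (bval (un n) t) (bval u t)).
  { apply (C_cv_unique (fun k => v (t k))); [apply (bval_spec m b c); auto; apply Ht|].
    replace (Csub (bval (un n) t) (bval u t)) with (Csub (Csub (bval (un n) t) (bval u t)) C0) by apply Csub_C0.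
    apply C_cv_sub; [apply C_cv_sub; apply (bval_spec m b c); auto; apply Ht|]. apply (part1 m b c Hg Hc); auto. }
  rewrite <- E. eapply Rle_trans; [apply HB; auto; apply Ht|].
  specialize (HN n Hn). unfold R_dist in HN. rewrite Rminus_0_r in HN. fold v in HN.
  assert (NQ m b c v <= eps / K).
  { unfold NQ. rewrite <- (sqrt_square (eps/K)) by (apply Rlt_le, Rdiv_lt_0_compat; lra). apply sqrt_le_1_alt.
    apply Rabs_def2 in HN. lra. }
  apply (Rmult_le_compat_r K) in H; [|lra]. field_simplify in H; lra.
Qed.

Lemma fin_sum_split {T} (f : T -> R) (P : T -> bool) L :
  fin_sum f L = fin_sum f (filter P L) + fin_sum f (filter (fun x => negb (P x)) L).
Proof. induction L as [|a L IH]; [simpl; lra|]. cbn [filter]. destruct (P a); cbn [negb]; rewrite ?fin_sum_cons, IH; lra. Qed.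

Lemma fin_sum_cv {T} (f : nat -> T -> R) l : (forall x, Un_cv (fun n => f n x) 0) -> Un_cv (fun n => fin_sum (f n) l) 0.
Proof.
  intros H. induction l as [|a l IH].
  - apply (Un_cv_ext' (fun _ => 0)); [intros; reflexivity|apply Un_cv_const].
  - replace 0 with (0 + 0) by ring. apply (Un_cv_ext' (fun n => f n a + fin_sum (f n) l)); [intros; reflexivity|].
    apply CV_plus; auto.
Qed.

Lemma dom_cv {T} (f : nat -> T -> R) (g : T -> R) :
  (forall n x, 0 <= f n x) -> (forall n x, f n x <= g x) -> nn_summable g ->
  (forall x, Un_cv (fun n => f n x) 0) -> Un_cv (fun n => nnsum (f n)) 0.
Proof.
  intros H0 H1 Sg Hcv e He.
  destruct (nnsum_approx g (e/3) Sg) as [l [Nl Hl]]; [lra|].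
  destruct (fin_sum_cv f l Hcv (e/3)) as [N HN]; [lra|].
  exists N. intros n Hn. specialize (HN n Hn). unfold R_dist in *. rewrite Rminus_0_r in *.
  assert (Hg0 : forall x, 0 <= g x) by (intros x; specialize (H0 n x); specialize (H1 n x); lra).
  assert (Hb : nn_summable (f n) /\ nnsum (f n) <= 2 * e / 3).
  { apply nn_bound. intros L NL.
    rewrite (fin_sum_split (f n) (fun x => dec (In x l)) L).
    assert (A1 : fin_sum (f n) (filter (fun x => dec (In x l)) L) <= fin_sum (f n) l).
    { apply fin_sum_incl; auto. apply NoDup_filter; auto. intros x Hx. apply filter_In in Hx. apply decT; tauto. }
    set (L2 := filter (fun x => negb (dec (In x l))) L).
    assert (A2 : fin_sum (f n) L2 <= fin_sum g L2) by (apply fin_sum_le; auto).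
    assert (A3 : fin_sum g L2 + fin_sum g l <= nnsum g).
    { rewrite <- fin_sum_app. apply nnsum_ge; auto. apply NoDup_app; auto. apply NoDup_filter; auto.
      intros x Hx Hx2. unfold L2 in Hx. apply filter_In in Hx. destruct Hx as [_ Hx].
      rewrite (decT' Hx2) in Hx. discriminate. }
    pose proof (fin_sum_nonneg (f n) l (H0 n)). rewrite Rabs_right in HN; [|lra]. lra. }
  destruct Hb as [Sf Hb]. pose proof (nnsum_nonneg _ Sf). rewrite Rabs_right; lra.
Qed.

Definition tr (d r : R) : R := Rmax (- d) (Rmin d r).
Definition Ctr (d : R) (z : Cpx) : Cpx := (tr d (fst z), tr d (snd z)).

Lemma tr_cases d a : 0 <= d -> (a <= - d /\ tr d a = - d) \/ (- d <= a <= d /\ tr d a = a) \/ (d <= a /\ tr d a = d).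
Proof. intros Hd. unfold tr. destruct (Rle_dec a d) as [H1|H1]; destruct (Rle_dec (-d) a) as [H2|H2].
  - right; left. rewrite Rmin_right, Rmax_right; lra.
  - left. rewrite Rmin_right, Rmax_left; lra.
  - right; right. rewrite Rmin_left, Rmax_right; lra.
  - lra. Qed.
Lemma abs_le_iff x y : Rabs x <= y <-> - y <= x <= y.
Proof. split; [intros H; pose proof (Rle_abs x); pose proof (Rle_abs (-x)); rewrite Rabs_Ropp in *; lra|].
  intros [H1 H2]; apply Rabs_le; lra. Qed.
Lemma tr_lip d a c : 0 <= d -> Rabs (tr d a - tr d c) <= Rabs (a - c).
Proof. intros Hd. pose proof (Rle_abs (a - c)); pose proof (Rle_abs (- (a - c))); rewrite Rabs_Ropp in *.
  apply abs_le_iff.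
  destruct (tr_cases d a Hd) as [[A1 A2]|[[A1 A2]|[A1 A2]]]; destruct (tr_cases d c Hd) as [[C1 C2]|[[C1 C2]|[C1 C2]]];
  rewrite A2, C2; lra. Qed.
Lemma tr_abs d a : 0 <= d -> Rabs (tr d a) <= Rabs a /\ Rabs (tr d a) <= d.
Proof. intros Hd. pose proof (Rle_abs a); pose proof (Rle_abs (- a)); rewrite Rabs_Ropp in *.
  destruct (tr_cases d a Hd) as [[A1 A2]|[[A1 A2]|[A1 A2]]]; rewrite A2; split; apply abs_le_iff; lra. Qed.
Lemma tr_id d a : Rabs a <= d -> tr d a = a.
Proof. intros H. pose proof (Rabs_pos a). apply abs_le_iff in H. destruct (tr_cases d a) as [[A1 A2]|[[A1 A2]|[A1 A2]]]; lra. Qed.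

Lemma sq_abs_le x y : Rabs x <= Rabs y -> x * x <= y * y.
Proof. intros H. rewrite <- !Rsqr_def, (Rsqr_abs x), (Rsqr_abs y). unfold Rsqr. pose proof (Rabs_pos x); nra. Qed.
Lemma tr_abs_le d a : 0 <= d -> tr d a * tr d a <= a * a.
Proof. intros Hd. destruct (tr_abs d a Hd) as [H _]. apply sq_abs_le; auto. Qed.

Lemma Ctr_lip d a c : 0 <= d -> Cmod2 (Csub (Ctr d a) (Ctr d c)) <= Cmod2 (Csub a c).
Proof. intros Hd. rewrite !Csub_components. unfold Cmod2, Ctr, Rsqr; simpl.
  pose proof (sq_abs_le _ _ (tr_lip d (fst a) (fst c) Hd)). pose proof (sq_abs_le _ _ (tr_lip d (snd a) (snd c) Hd)). lra. Qed.
Lemma Ctr_le d z : 0 <= d -> Cmod2 (Ctr d z) <= Cmod2 z.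
Proof. intros Hd. unfold Cmod2, Ctr, Rsqr; simpl. pose proof (tr_abs_le d (fst z) Hd); pose proof (tr_abs_le d (snd z) Hd); lra. Qed.
Lemma Ctr_small d z : 0 <= d -> Cmod2 (Ctr d z) <= 2 * (d * d).
Proof. intros Hd. unfold Cmod2, Ctr, Rsqr; simpl. destruct (tr_abs d (fst z) Hd) as [_ H1]. destruct (tr_abs d (snd z) Hd) as [_ H2].
  assert (H1' : Rabs (tr d (fst z)) <= Rabs d) by (rewrite (Rabs_right d); lra).
  assert (H2' : Rabs (tr d (snd z)) <= Rabs d) by (rewrite (Rabs_right d); lra).
  apply sq_abs_le in H1'. apply sq_abs_le in H2'. lra. Qed.

Lemma inv_S_pos n : 0 < / INR (S n).
Proof. apply Rinv_0_lt_compat, lt_0_INR; lia. Qed.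

Lemma inv_S_cv : Un_cv (fun n => / INR (S n)) 0.
Proof.
  intros e He. destruct (archimed_cor1 e He) as [N [HN HN0]]. exists N. intros n Hn. unfold R_dist.
  rewrite Rminus_0_r, Rabs_right by (apply Rle_ge, Rlt_le, inv_S_pos).
  apply Rle_lt_trans with (/ INR N); auto. apply Rinv_le_contravar; [apply lt_0_INR; lia|apply le_INR; lia].
Qed.

Lemma squeeze0 (f g : nat -> R) : (forall n, 0 <= f n <= g n) -> Un_cv g 0 -> Un_cv f 0.
Proof. intros H Hg e He. destruct (Hg e He) as [N HN]. exists N. intros n Hn. specialize (HN n Hn). specialize (H n).
  unfold R_dist in *. rewrite Rminus_0_r in *. rewrite Rabs_right in * by lra. lra. Qed.

Lemma sq_cv_K K : Un_cv (fun n => K * (/ INR (S n) * / INR (S n))) 0.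
Proof. replace 0 with (K * (0 * 0)) by ring. apply CV_mult; [apply Un_cv_const|]. apply CV_mult; apply inv_S_cv. Qed.

Lemma trunc_DN {V} (m : V -> R) b c (Hg : is_graph m b c) u d : in_DN m b c u -> 0 <= d ->
  in_DN m b c (fun x => Ctr d (u x)).
Proof. intros Hu Hd. apply (QN_le m b c Hg u u _ 1 0 Hu Hu); try lra.
  - intros x y. pose proof (Ctr_lip d (u x) (u y) Hd). pose proof (Cmod2_nonneg (Csub (u x) (u y))). lra.
  - intros x. pose proof (Ctr_le d (u x) Hd). pose proof (Cmod2_nonneg (u x)). lra. Qed.

Lemma Cmod2_sub_le2 a c : Cmod2 (Csub a c) <= 2 * Cmod2 a + 2 * Cmod2 c.
Proof. unfold Csub. pose proof (Cmod2_add_le a (Copp c) 1 ltac:(lra)). rewrite Cmod2_Copp in H.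
  replace (1 + / 1) with 2 in H by (rewrite Rinv_1; ring). lra. Qed.

Lemma trunc_cv {V} (m : V -> R) b c (Hg : is_graph m b c) u : in_DN m b c u ->
  Un_cv (fun n => QN_norm2 m b c (fun x => Ctr (/ INR (S n)) (u x))) 0.
Proof.
  intros Hu. destruct (DN_parts _ _ _ _ Hu) as [S3 [S1 S2]].
  set (d := fun n => / INR (S n)).
  assert (Hd : forall n, 0 <= d n) by (intros; apply Rlt_le, inv_S_pos).
  assert (C1 : Un_cv (fun n => nnsum (E1 b (fun x => Ctr (d n) (u x)))) 0).
  { apply (dom_cv (fun n => E1 b (fun x => Ctr (d n) (u x))) (E1 b u)); auto.
    - intros; apply (E1_nonneg m b c Hg).
    - intros n p. unfold E1. apply Rmult_le_compat_l; [apply (graph_b_nonneg m b c Hg)|apply Ctr_lip; auto].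
    - intros p. apply (squeeze0 _ (fun n => (b (fst p) (snd p) * 8) * (d n * d n))); [|apply sq_cv_K].
      intros n; split; [apply (E1_nonneg m b c Hg)|]. unfold E1.
      pose proof (Cmod2_sub_le2 (Ctr (d n) (u (fst p))) (Ctr (d n) (u (snd p)))).
      pose proof (Ctr_small (d n) (u (fst p)) (Hd n)). pose proof (Ctr_small (d n) (u (snd p)) (Hd n)).
      pose proof (graph_b_nonneg m b c Hg (fst p) (snd p)).
      apply Rle_trans with (b (fst p) (snd p) * (8 * (d n * d n))); [apply Rmult_le_compat_l; auto; lra|lra]. }
  assert (C2 : Un_cv (fun n => nnsum (E2 c (fun x => Ctr (d n) (u x)))) 0).
  { apply (dom_cv (fun n => E2 c (fun x => Ctr (d n) (u x))) (E2 c u)); auto.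
    - intros; apply (E2_nonneg m b c Hg).
    - intros n p. unfold E2. apply Rmult_le_compat_l; [apply (graph_c_nonneg m b c Hg)|apply Ctr_le; auto].
    - intros p. apply (squeeze0 _ (fun n => (c p * 2) * (d n * d n))); [|apply sq_cv_K].
      intros n; split; [apply (E2_nonneg m b c Hg)|]. unfold E2.
      pose proof (Ctr_small (d n) (u p) (Hd n)). pose proof (graph_c_nonneg m b c Hg p).
      apply Rle_trans with (c p * (2 * (d n * d n))); [apply Rmult_le_compat_l; auto; lra|lra]. }
  assert (C3 : Un_cv (fun n => nnsum (E3 m (fun x => Ctr (d n) (u x)))) 0).
  { apply (dom_cv (fun n => E3 m (fun x => Ctr (d n) (u x))) (E3 m u)); auto.
    - intros; apply (E3_nonneg m b c Hg).
    - intros n p. unfold E3. apply Rmult_le_compat_r; [apply Rlt_le, (graph_m_pos m b c Hg)|apply Ctr_le; auto].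
    - intros p. apply (squeeze0 _ (fun n => (m p * 2) * (d n * d n))); [|apply sq_cv_K].
      intros n; split; [apply (E3_nonneg m b c Hg)|]. unfold E3.
      pose proof (Ctr_small (d n) (u p) (Hd n)). pose proof (graph_m_pos m b c Hg p).
      apply Rle_trans with ((2 * (d n * d n)) * m p); [apply Rmult_le_compat_r; lra|lra]. }
  apply (Un_cv_ext' (fun n => / 2 * nnsum (E1 b (fun x => Ctr (d n) (u x))) + nnsum (E2 c (fun x => Ctr (d n) (u x)))
     + nnsum (E3 m (fun x => Ctr (d n) (u x))))); [intros; reflexivity|].
  replace 0 with (/ 2 * 0 + 0 + 0) by ring. apply CV_plus; [apply CV_plus|]; auto.
  apply CV_mult; auto. apply Un_cv_const.
Qed.

Fixpoint iterL {V} (F : list V -> V) (n : nat) : list V :=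
  match n with O => [] | S k => F (iterL F k) :: iterL F k end.

Lemma iterL_in {V} (F : list V -> V) k n : (k < n)%nat -> In (F (iterL F k)) (iterL F n).
Proof. induction n; intros H; [lia|]. simpl. destruct (Nat.eq_dec k n) as [->|Hne]; [left; auto|right; apply IHn; lia]. Qed.

Lemma last_edge {V} (b : V -> V -> R) : forall l x, l <> [] -> chain b x l -> exists z, b z (last (x :: l) x) > 0.
Proof.
  intros l; induction l as [|a l IH]; intros x Hne Hch; [congruence|]. destruct Hch as [Hb Hch].
  change (last (x :: a :: l) x) with (last (a :: l) x). rewrite (last_default a l x a).
  destruct l as [|a' l']. - exists x; simpl; auto. - apply IH; auto; congruence.
Qed.

Lemma deg_pos {V} (m : V -> R) b c (Hg : is_graph m b c) (Hc : connected b) x y : x <> y -> 0 < nnsum (b y).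
Proof.
  intros Hne. destruct (Hc x y) as [p Hp]. destruct p as [|x1 l]; [destruct Hp|]. destruct Hp as [Hx1 [Hch Hl]]. subst x1.
  destruct (last_edge b l x) as [z Hz]; auto. { intros ->. simpl in Hl. congruence. }
  rewrite Hl in Hz. pose proof (b_le_deg m b c Hg y z). rewrite (graph_b_sym m b c Hg z y) in Hz. lra.
Qed.

Lemma lim_le (a1 a2 : nat -> R) l1 l2 cst : Un_cv a1 l1 -> Un_cv a2 l2 -> (forall n, cst <= a1 n + a2 n) -> cst <= l1 + l2.
Proof. intros H1 H2 H. apply le_of_eps; intros e He. destruct (H1 (e/2)) as [N1 K1]; [lra|]. destruct (H2 (e/2)) as [N2 K2]; [lra|].
  specialize (K1 (max N1 N2) ltac:(lia)); specialize (K2 (max N1 N2) ltac:(lia)). specialize (H (max N1 N2)).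
  unfold R_dist in *. apply Rabs_def2 in K1; apply Rabs_def2 in K2. lra. Qed.

Lemma fin_big {V} (m : V -> R) b c (Hg : is_graph m b c) (Hc : connected b) u :
  Vhat_compact b -> in_DN m b c u -> (forall s, Vinf_pt b s -> C_cv (fun n => u (s n)) C0) ->
  forall d, d > 0 -> exists l, forall x, ~ In x l -> Cnorm (u x) <= d.
Proof.
  intros Hcomp Hu Hb d Hd. apply NNPP; intros Hcon.
  assert (H' : forall l, exists x, ~ In x l /\ Cnorm (u x) > d).
  { intros l; apply NNPP; intros Hn; apply Hcon; exists l; intros x Hx; apply Rnot_lt_le; intros Hlt; apply Hn; exists x; auto. }
  set (F := fun l => proj1_sig (constructive_indefinite_description _ (H' l))).
  assert (HF : forall l, ~ In (F l) l /\ Cnorm (u (F l)) > d) by (intros l; unfold F; apply proj2_sig).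
  set (x := fun n => F (iterL F n)).
  assert (Hinj : forall k n, (k < n)%nat -> x k <> x n).
  { intros k n Hkn Heq. apply (proj1 (HF (iterL F n))). fold (x n). rewrite <- Heq. apply iterL_in; auto. }
  destruct (Hcomp (fun k _ => x k)) as [phi [Hphi [t [Ht Hcv]]]]; [intros k; apply cauchy_const; auto|].
  assert (Hlim : forall k, Un_cv (fun n => dist b (x (phi k)) (t n)) (dhat b (fun _ => x (phi k)) t)).
  { intros k. apply (dhat_spec b Hc (fun _ => x (phi k)) t); auto. apply cauchy_const; auto. }
  destruct (classic (exists y, Un_cv (fun n => dist b (t n) y) 0)) as [[y Hy]|Hny].
  - assert (Hdy : forall k, dist b (x (phi k)) y <= dhat b (fun _ => x (phi k)) t).
    { intros k. replace (dhat b (fun _ => x (phi k)) t) with (dhat b (fun _ => x (phi k)) t + 0) by ring.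
      apply (lim_le _ _ _ _ _ (Hlim k) Hy). intros n; apply dist_triangle; auto. }
    assert (Hdeg : 0 < nnsum (b y)).
    { destruct (classic (x (phi 0%nat) = y)) as [E|E].
      - apply (deg_pos m b c Hg Hc (x (phi 1%nat))). rewrite <- E. intros E2. apply (Hinj (phi 0%nat) (phi 1%nat)); auto.
      - apply (deg_pos m b c Hg Hc (x (phi 0%nat))); auto. }
    assert (Hr : / sqrt (nnsum (b y)) > 0) by (apply Rinv_0_lt_compat, sqrt_lt_R0; auto).
    destruct (Hcv _ Hr) as [K HK].
    assert (Hey : forall k, (K <= k)%nat -> x (phi k) = y).
    { intros k Hk. apply NNPP; intros Hne. pose proof (dist_lower m b c Hg Hc _ _ Hne). specialize (HK k Hk).
      specialize (Hdy k). unfold R_dist in HK. rewrite Rminus_0_r in HK. pose proof (Rle_abs (dhat b (fun _ => x (phi k)) t)). lra. }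
    apply (Hinj (phi K) (phi (S K))); auto. rewrite (Hey K), (Hey (S K)); auto.
  - assert (Hvt : Vinf_pt b t) by (split; auto).
    specialize (Hb t Hvt). pose proof (NQ_nonneg m b c u) as HNQ.
    set (r := d / (2 * (NQ m b c u + 1))). assert (Hr : r > 0) by (unfold r; apply Rdiv_lt_0_compat; lra).
    destruct (Hcv r Hr) as [K HK]. specialize (HK K (le_n _)). unfold R_dist in HK. rewrite Rminus_0_r in HK.
    pose proof (Rle_abs (dhat b (fun _ => x (phi K)) t)).
    destruct (Hlim K (r - dhat b (fun _ => x (phi K)) t)) as [N1 HN1]; [lra|].
    destruct (Hb (d / 2)) as [N2 HN2]; [lra|].
    set (n := max N1 N2). specialize (HN1 n ltac:(unfold n; lia)). specialize (HN2 n ltac:(unfold n; lia)).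
    unfold R_dist in HN1. apply Rabs_def2 in HN1. rewrite Cnorm_Csub_C0 in HN2.
    pose proof (DN_lip m b c Hg Hc u (x (phi K)) (t n) Hu).
    pose proof (Cnorm_sub_triang (u (x (phi K))) (u (t n)) C0). rewrite !Cnorm_Csub_C0 in H1.
    pose proof (proj2 (HF (iterL F (phi K)))). fold (x (phi K)) in H2.
    assert (NQ m b c u * dist b (x (phi K)) (t n) <= NQ m b c u * r) by (apply Rmult_le_compat_l; lra).
    assert (NQ m b c u * r < d / 2).
    { apply Rlt_le_trans with ((NQ m b c u + 1) * r); [apply Rmult_lt_compat_r; lra|].
      unfold r. replace ((NQ m b c u + 1) * (d / (2 * (NQ m b c u + 1)))) with (d / 2) by (field; lra). lra. }
    lra.
Qed.

Lemma part6 {V} (m : V -> R) b c (Hg : is_graph m b c) (Hc : connected b) :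
  Vhat_compact b ->
     forall u v, in_DN m b c u -> in_DN m b c v ->
       (forall s, Vinf_pt b s -> bval u s = bval v s) -> in_DD m b c (fsub u v).
Proof.
  intros Hcomp u v Hu Hv Heq. set (w := fsub u v).
  assert (Hw : in_DN m b c w) by (apply (DN_sub m b c Hg); auto).
  assert (Hb : forall s, Vinf_pt b s -> C_cv (fun n => w (s n)) C0).
  { intros s Hs. replace C0 with (Csub (bval u s) (bval v s)) by (rewrite Heq; auto; apply Csub_self).
    apply C_cv_sub; apply (bval_spec m b c Hg Hc); auto; apply Hs. }
  split; auto. intros e He.
  destruct (trunc_cv m b c Hg w Hw e He) as [N HN]. specialize (HN N (le_n _)).
  unfold R_dist in HN. rewrite Rminus_0_r in HN.
  set (d := / INR (S N)). assert (Hd : d > 0) by apply inv_S_pos.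
  destruct (fin_big m b c Hg Hc w Hcomp Hw Hb d Hd) as [l Hl].
  exists (fun x => Csub (w x) (Ctr d (w x))). split.
  - exists l. intros x Hx. specialize (Hl x Hx).
    pose proof (Cnorm_fst (w x)); pose proof (Cnorm_snd (w x)).
    unfold Ctr. rewrite (tr_id d (fst (w x))), (tr_id d (snd (w x))) by lra.
    destruct (w x); apply Csub_self.
  - rewrite (QN_ext m b c _ (fun x => Ctr d (w x))).
    + pose proof (Rle_abs (QN_norm2 m b c (fun x => Ctr (/ INR (S N)) (w x)))). fold d in H, HN. lra.
    + intros x. unfold fsub. destruct (w x), (Ctr d (r, r0)); unfold Csub, Cadd, Copp; simpl; f_equal; ring.
Qed.

Lemma fin_sum_cv_gen {T} (f : nat -> T -> R) (F : T -> R) l :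
  (forall x, Un_cv (fun n => f n x) (F x)) -> Un_cv (fun n => fin_sum (f n) l) (fin_sum F l).
Proof.
  intros H. induction l as [|a l IH].
  - apply (Un_cv_ext' (fun _ => 0)); [intros; reflexivity|apply Un_cv_const].
  - rewrite fin_sum_cons. apply (Un_cv_ext' (fun n => f n a + fin_sum (f n) l)); [intros; reflexivity|].
    apply CV_plus; auto.
Qed.

Lemma C_cv_Cmod2 s z : C_cv s z -> Un_cv (fun n => Cmod2 (s n)) (Cmod2 z).
Proof.
  intros H. apply C_cv_iff in H. destruct H as [H1 H2]. unfold Cmod2, Rsqr.
  apply CV_plus; apply CV_mult; auto.
Qed.

Lemma C_cv_const z : C_cv (fun _ => z) z.
Proof. intros e He. exists 0%nat. intros. rewrite Csub_self, Cnorm_C0; lra. Qed.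

Lemma Un_cv_le_lim (a : nat -> R) l M N : Un_cv a l -> (forall n, (N <= n)%nat -> a n <= M) -> l <= M.
Proof. intros H HM. apply le_of_eps; intros e He. destruct (H e He) as [N1 HN]. specialize (HN (max N N1) ltac:(lia)).
  specialize (HM (max N N1) ltac:(lia)). unfold R_dist in HN. apply Rabs_def2 in HN. lra. Qed.

Lemma three_bound {A B} (f1 : A -> R) (f2 f3 : B -> R) e :
  (forall x, 0 <= f1 x) -> (forall x, 0 <= f2 x) -> (forall x, 0 <= f3 x) ->
  (forall l1 l2 l3, NoDup l1 -> NoDup l2 -> NoDup l3 -> / 2 * fin_sum f1 l1 + fin_sum f2 l2 + fin_sum f3 l3 <= e) ->
  nn_summable f1 /\ nn_summable f2 /\ nn_summable f3 /\ / 2 * nnsum f1 + nnsum f2 + nnsum f3 <= e.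
Proof.
  intros H1 H2 H3 H.
  assert (S1 : nn_summable f1).
  { apply (nn_bound f1 (2 * e)). intros l Hl. specialize (H l [] [] Hl (NoDup_nil _) (NoDup_nil _)).
    rewrite !fin_sum_nil in H. lra. }
  assert (S2 : nn_summable f2).
  { apply (nn_bound f2 e). intros l Hl. specialize (H [] l [] (NoDup_nil _) Hl (NoDup_nil _)).
    rewrite !fin_sum_nil in H. lra. }
  assert (S3 : nn_summable f3).
  { apply (nn_bound f3 e). intros l Hl. specialize (H [] [] l (NoDup_nil _) (NoDup_nil _) Hl).
    rewrite !fin_sum_nil in H. lra. }
  repeat split; auto. apply le_of_eps; intros eta He.
  destruct (nnsum_approx f1 (eta/2) S1) as [l1 [N1 K1]]; [lra|].
  destruct (nnsum_approx f2 (eta/4) S2) as [l2 [N2 K2]]; [lra|].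
  destruct (nnsum_approx f3 (eta/4) S3) as [l3 [N3 K3]]; [lra|].
  specialize (H l1 l2 l3 N1 N2 N3). lra.
Qed.

Lemma QN_sym {V} (m : V -> R) b c (Hg : is_graph m b c) u v : in_DN m b c u -> in_DN m b c v ->
  QN_norm2 m b c (fsub u v) = QN_norm2 m b c (fsub v u).
Proof.
  intros Hu Hv. destruct (DN_scal m b c Hg (fsub u v) (-1, 0) (DN_sub m b c Hg u v Hu Hv)) as [_ H].
  replace (Cmod2 (-1, 0)) with 1 in H by (unfold Cmod2, Rsqr; simpl; ring).
  rewrite Rmult_1_l in H. rewrite <- H. apply QN_ext. intros x. unfold fsub.
  destruct (u x), (v x); unfold Csub, Cadd, Copp, Cmul; simpl; f_equal; ring.
Qed.

Lemma Cnorm_le_sqrt_div z r M : 0 < r -> Cmod2 z * r <= M -> Cnorm z <= sqrt (M / r).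
Proof. intros Hr H. rewrite Cnorm_sqrt. apply sqrt_le_1_alt. apply (Rmult_le_reg_r r); auto.
  replace (M / r * r) with M by (field; lra). lra. Qed.

Lemma DN_complete {V} (m : V -> R) b c (Hg : is_graph m b c) (g : nat -> V -> Cpx) :
  (forall n, in_DN m b c (g n)) ->
  (forall e, e > 0 -> exists N, forall n k, (N <= n)%nat -> (N <= k)%nat -> QN_norm2 m b c (fsub (g n) (g k)) < e) ->
  exists w, in_DN m b c w /\ Un_cv (fun n => QN_norm2 m b c (fsub (g n) w)) 0.
Proof.
  intros Hg0 Hcau.
  assert (Hpt : forall x, exists z, C_cv (fun n => g n x) z).
  { intros x. apply C_cauchy_cv. intros e He. pose proof (graph_m_pos m b c Hg x) as Hm.
    destruct (Hcau ((e * e) * m x)) as [N HN]; [apply Rmult_lt_0_compat; nra|].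
    exists N. intros n k Hn Hk. specialize (HN n k Hn Hk).
    pose proof (QN_pt m b c Hg (fsub (g n) (g k)) x (DN_sub m b c Hg _ _ (Hg0 n) (Hg0 k))).
    change (fsub (g n) (g k) x) with (Csub (g n x) (g k x)) in H. assert (Cmod2 (Csub (g n x) (g k x)) < e * e).
    { apply (Rmult_lt_reg_r (m x)); auto. lra. }
    pose proof (Cnorm_nonneg (Csub (g n x) (g k x))). rewrite <- Cnorm_sq in H0. nra. }
  set (w := fun x => epsilon (inhabits C0) (fun z => C_cv (fun n => g n x) z)).
  assert (Hw : forall x, C_cv (fun n => g n x) (w x)) by (intros x; unfold w; apply epsilon_spec, Hpt).
  assert (Key : forall e, e > 0 -> exists N, forall n, (N <= n)%nat -> in_DN m b c (fsub (g n) w) /\ QN_norm2 m b c (fsub (g n) w) <= e).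
  { intros e He. destruct (Hcau e He) as [N HN]. exists N. intros n Hn.
    destruct (three_bound (E1 b (fsub (g n) w)) (E2 c (fsub (g n) w)) (E3 m (fsub (g n) w)) e
      (E1_nonneg m b c Hg _) (E2_nonneg m b c Hg _) (E3_nonneg m b c Hg _)) as [S1 [S2 [S3 Hle]]].
    - intros l1 l2 l3 N1 N2 N3.
      set (F := fun k => / 2 * fin_sum (E1 b (fsub (g n) (g k))) l1 + fin_sum (E2 c (fsub (g n) (g k))) l2
                         + fin_sum (E3 m (fsub (g n) (g k))) l3).
      apply (Un_cv_le_lim F _ e N).
      + unfold F. apply CV_plus; [apply CV_plus|].
        * apply CV_mult; [apply Un_cv_const|]. apply fin_sum_cv_gen. intros p. unfold E1.
          apply CV_mult; [apply Un_cv_const|]. apply C_cv_Cmod2. unfold fsub.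
          apply C_cv_sub; apply C_cv_sub; auto; apply C_cv_const.
        * apply fin_sum_cv_gen. intros x. unfold E2. apply CV_mult; [apply Un_cv_const|]. apply C_cv_Cmod2.
          unfold fsub. apply C_cv_sub; auto; apply C_cv_const.
        * apply fin_sum_cv_gen. intros x. unfold E3. apply CV_mult; [|apply Un_cv_const]. apply C_cv_Cmod2.
          unfold fsub. apply C_cv_sub; auto; apply C_cv_const.
      + intros k Hk. specialize (HN n k Hn Hk). unfold F.
        destruct (DN_parts _ _ _ _ (DN_sub m b c Hg _ _ (Hg0 n) (Hg0 k))) as [T3 [T1 T2]].
        pose proof (nnsum_ge _ l1 T1 N1). pose proof (nnsum_ge _ l2 T2 N2). pose proof (nnsum_ge _ l3 T3 N3).
        rewrite QN_norm2_eq in HN. lra.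
    - split; [split; [|split]; auto|]. rewrite QN_norm2_eq; lra. }
  destruct (Key 1 ltac:(lra)) as [N0 HN0]. destruct (HN0 N0 (le_n _)) as [HD0 _].
  exists w. split.
  - eapply DN_ext; [|apply (DN_sub m b c Hg _ _ (Hg0 N0) HD0)]. intros x; unfold fsub.
    destruct (g N0 x), (w x); unfold Csub, Cadd, Copp; simpl; f_equal; ring.
  - intros e He. destruct (Key (e/2) ltac:(lra)) as [N HN]. exists N. intros n Hn. destruct (HN n Hn) as [H1 H2].
    unfold R_dist. rewrite Rminus_0_r. pose proof (QN_nonneg m b c Hg _ H1). rewrite Rabs_right; lra.
Qed.

Lemma glb_exists (Es : R -> Prop) : (exists x, Es x) -> (forall x, Es x -> 0 <= x) -> exists d, is_glb Es d.
Proof.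
  intros [x0 Hx0] Hnn.
  destruct (completeness (fun r => Es (- r))) as [m [Hm1 Hm2]].
  - exists 0. intros r Hr. apply Hnn in Hr. lra.
  - exists (- x0). rewrite Ropp_involutive; auto.
  - exists (- m). split.
    + intros z Hz. assert (- z <= m) by (apply Hm1; rewrite Ropp_involutive; auto). lra.
    + intros r' Hr'. assert (m <= - r'); [|lra]. apply Hm2. intros z Hz. specialize (Hr' _ Hz). lra.
Qed.

Lemma le_lim (a : nat -> R) l X N : Un_cv a l -> (forall n, (N <= n)%nat -> X <= a n) -> X <= l.
Proof. intros H HM. apply le_of_eps; intros e He. destruct (H e He) as [N1 HN]. specialize (HN (max N N1) ltac:(lia)).
  specialize (HM (max N N1) ltac:(lia)). unfold R_dist in HN. apply Rabs_def2 in HN. lra. Qed.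

Lemma le_of_t X d : 0 <= d -> (forall t, t > 0 -> X <= (1 + t) * d) -> X <= d.
Proof. intros Hd H. apply le_of_eps; intros e He. specialize (H (e / (2 * (d + 1))) ltac:(apply Rdiv_lt_0_compat; lra)).
  assert ((1 + e / (2 * (d + 1))) * d < d + e); [|lra].
  replace ((1 + e / (2 * (d + 1))) * d) with (d + e * (d / (2 * (d + 1)))) by (field; lra).
  assert (d / (2 * (d + 1)) < 1) by (apply (Rmult_lt_reg_r (2 * (d + 1))); [lra|]; field_simplify; lra).
  nra. Qed.

Lemma fin_supp_comb {V} (u v : V -> Cpx) al be : fin_supp u -> fin_supp v ->
  fin_supp (fun x => Cadd (Cmul al (u x)) (Cmul be (v x))).
Proof. intros [l1 H1] [l2 H2]. exists (l1 ++ l2). intros x Hx. rewrite H1, H2.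
  - unfold Cadd, Cmul, C0; simpl; f_equal; ring.
  - intros Hin; apply Hx, in_app_iff; auto.
  - intros Hin; apply Hx, in_app_iff; auto. Qed.

Lemma fin_supp_zero {V} : fin_supp (fun _ : V => C0).
Proof. exists []; auto. Qed.

Lemma paral_diff a b a' b' : Cmod2 (Csub (Csub a b) (Csub a' b')) + Cmod2 (Csub (Cadd a b) (Cadd a' b'))
  = 2 * Cmod2 (Csub a a') + 2 * Cmod2 (Csub b b').
Proof. destruct a, b, a', b'; unfold Cmod2, Csub, Cadd, Copp, Rsqr; simpl; ring. Qed.
Lemma paral_val a b : Cmod2 (Csub a b) + Cmod2 (Cadd a b) = 2 * Cmod2 a + 2 * Cmod2 b.
Proof. destruct a, b; unfold Cmod2, Csub, Cadd, Copp, Rsqr; simpl; ring. Qed.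

Lemma inv_S_le n N : (0 < N)%nat -> (N <= n)%nat -> / INR (S n) <= / INR N.
Proof. intros H0 H. apply Rinv_le_contravar; [apply lt_0_INR; lia|apply le_INR; lia]. Qed.

Lemma minimizer {V} (m : V -> R) b c (Hg : is_graph m b c) (Hc : connected b) f : in_DN m b c f ->
  exists w, in_DN m b c w /\ in_DD m b c (fsub w f) /\
    forall psi, fin_supp psi -> QN_norm2 m b c w <= QN_norm2 m b c (fsub w psi).
Proof.
  intros Hf.
  set (Es := fun r => exists phi, fin_supp phi /\ r = QN_norm2 m b c (fsub f phi)).
  destruct (glb_exists Es) as [d [Hd1 Hd2]].
  { exists (QN_norm2 m b c (fsub f (fun _ => C0))). exists (fun _ => C0); split; auto. apply fin_supp_zero. }
  { intros r [phi [Hphi ->]]. apply QN_nonneg; auto. apply (DN_sub m b c Hg); auto. apply (DN_fin_supp m b c Hg); auto. }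
  assert (Hlow : forall phi, fin_supp phi -> d <= QN_norm2 m b c (fsub f phi)) by (intros phi Hp; apply Hd1; exists phi; auto).
  assert (Hd0 : 0 <= d) by (apply Hd2; intros r [phi [Hphi ->]]; apply QN_nonneg; auto; apply (DN_sub m b c Hg); auto;
    apply (DN_fin_supp m b c Hg); auto).
  assert (Hap : forall n, exists phi, fin_supp phi /\ QN_norm2 m b c (fsub f phi) < d + / INR (S n)).
  { intros n. apply NNPP; intros Hn. assert (d + / INR (S n) <= d); [|pose proof (inv_S_pos n); lra].
    apply Hd2. intros r [phi [Hphi ->]]. apply Rnot_lt_le. intros Hl. apply Hn. exists phi; auto. }
  set (phi := fun n => epsilon (inhabits (fun _ : V => C0)) (fun phi => fin_supp phi /\ QN_norm2 m b c (fsub f phi) < d + / INR (S n))).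
  assert (Hphi : forall n, fin_supp (phi n) /\ QN_norm2 m b c (fsub f (phi n)) < d + / INR (S n))
    by (intros n; unfold phi; apply epsilon_spec, Hap).
  set (g := fun n => fsub f (phi n)).
  assert (Hgn : forall n, in_DN m b c (g n)) by (intros n; apply (DN_sub m b c Hg); auto; apply (DN_fin_supp m b c Hg), Hphi).
  assert (Hcau : forall n k, QN_norm2 m b c (fsub (g n) (g k)) <= 2 * / INR (S n) + 2 * / INR (S k)).
  { intros n k.
    set (psi := fun x => Cadd (Cmul (/ 2, 0) (phi n x)) (Cmul (/ 2, 0) (phi k x))).
    assert (Hpsi : fin_supp psi) by (apply fin_supp_comb; apply Hphi).
    assert (HpD : in_DN m b c (fsub f psi)) by (apply (DN_sub m b c Hg); auto; apply (DN_fin_supp m b c Hg); auto).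
    destruct (DN_scal m b c Hg _ (2, 0) HpD) as [HS1 HS2].
    assert (E : forall x, Cmul (2, 0) (fsub f psi x) = Cadd (g n x) (g k x)).
    { intros x. unfold g, fsub, psi. destruct (f x), (phi n x), (phi k x). unfold Cmul, Cadd, Csub, Copp; simpl; f_equal; field. }
    assert (Hsum : in_DN m b c (fun x => Cadd (g n x) (g k x))) by (eapply DN_ext; [exact E|exact HS1]).
    rewrite (QN_ext m b c _ _ E) in HS2. replace (Cmod2 (2, 0)) with 4 in HS2 by (unfold Cmod2, Rsqr; simpl; ring).
    assert (HP : QN_norm2 m b c (fsub (g n) (g k)) + QN_norm2 m b c (fun x => Cadd (g n x) (g k x))
       = 2 * QN_norm2 m b c (g n) + 2 * QN_norm2 m b c (g k)).
    { apply (QN_eq m b c Hg (g n) (g k) (fsub (g n) (g k)) (fun x => Cadd (g n x) (g k x)) 2 2 (Hgn n) (Hgn k)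
      (DN_sub m b c Hg _ _ (Hgn n) (Hgn k)) Hsum ltac:(lra) ltac:(lra)).
      - intros x y. unfold fsub. apply paral_diff.
      - intros x. unfold fsub. apply paral_val. }
    pose proof (Hlow psi Hpsi). pose proof (proj2 (Hphi n)). pose proof (proj2 (Hphi k)). unfold g in *. lra. }
  destruct (DN_complete m b c Hg g Hgn) as [w [Hw Hcv]].
  { intros e He. destruct (archimed_cor1 (e/4)) as [N [HN HN0]]; [lra|]. exists N. intros n k Hn Hk.
    specialize (Hcau n k). pose proof (inv_S_le n N HN0 Hn). pose proof (inv_S_le k N HN0 Hk). lra. }
  exists w. split; auto. split.
  - split; [apply (DN_sub m b c Hg); auto|]. intros e He.
    destruct (Hcv e He) as [N HN]. specialize (HN N (le_n _)). unfold R_dist in HN; rewrite Rminus_0_r in HN.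
    exists (fun x => Copp (phi N x)). split.
    + destruct (proj1 (Hphi N)) as [l Hl]. exists l. intros x Hx. rewrite Hl; auto. unfold Copp, C0; simpl; f_equal; ring.
    + rewrite (QN_ext m b c _ (fsub w (g N))).
      * rewrite (QN_sym m b c Hg); auto. pose proof (Rle_abs (QN_norm2 m b c (fsub (g N) w))). lra.
      * intros x. unfold g, fsub. destruct (w x), (f x), (phi N x); unfold Csub, Cadd, Copp; simpl; f_equal; ring.
  - intros psi Hpsi.
    assert (Hcv' : Un_cv (fun n => QN_norm2 m b c (fsub w (g n))) 0).
    { eapply Un_cv_ext'; [|exact Hcv]. intros n. apply (QN_sym m b c Hg); auto. }
    assert (HwD : QN_norm2 m b c w <= d).
    { apply le_of_t; auto. intros t Ht.
      apply (le_lim (fun n => (1 + t) * (d + / INR (S n)) + (1 + / t) * QN_norm2 m b c (fsub w (g n))) _ _ 0).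
      - assert (Hl : Un_cv (fun n => (1 + t) * (d + / INR (S n)) + (1 + / t) * QN_norm2 m b c (fsub w (g n)))
          ((1+t)*(d+0) + (1+/t)*0)).
        { apply CV_plus; apply CV_mult; try apply Un_cv_const; auto. apply CV_plus; [apply Un_cv_const|apply inv_S_cv]. }
        rewrite Rmult_0_r, Rplus_0_r, Rplus_0_r in Hl. exact Hl.
      - intros n _. rewrite (QN_ext m b c w (fun x => Cadd (g n x) (fsub w (g n) x))).
        + eapply Rle_trans; [apply (QN_add_le m b c Hg _ _ t); auto; apply (DN_sub m b c Hg); auto|].
          pose proof (proj2 (Hphi n)). apply Rplus_le_compat_r, Rmult_le_compat_l; [lra|]. unfold g; lra.
        + intros x; unfold fsub; destruct (w x), (g n x); unfold Csub, Cadd, Copp; simpl; f_equal; ring. }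
    assert (HpD : in_DN m b c (fsub w psi)) by (apply (DN_sub m b c Hg); auto; apply (DN_fin_supp m b c Hg); auto).
    assert (HdP : d <= QN_norm2 m b c (fsub w psi)).
    { apply le_of_t; [apply QN_nonneg; auto|]. intros t Ht.
      apply (le_lim (fun n => (1 + t) * QN_norm2 m b c (fsub w psi) + (1 + / t) * QN_norm2 m b c (fsub (g n) w)) _ _ 0).
      - assert (Hl : Un_cv (fun n => (1 + t) * QN_norm2 m b c (fsub w psi) + (1 + / t) * QN_norm2 m b c (fsub (g n) w))
          ((1+t) * QN_norm2 m b c (fsub w psi) + (1+/t)*0)) by (apply CV_plus; apply CV_mult; try apply Un_cv_const; auto).
        rewrite Rmult_0_r, Rplus_0_r in Hl. exact Hl.
      - intros n _.
        assert (Hfs : fin_supp (fun x => Cadd (phi n x) (psi x))).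
        { destruct (proj1 (Hphi n)) as [l1 H1]. destruct Hpsi as [l2 H2]. exists (l1 ++ l2). intros x Hx.
          rewrite H1, H2; [unfold Cadd, C0; simpl; f_equal; ring| |]; intros Hin; apply Hx, in_app_iff; auto. }
        pose proof (Hlow _ Hfs).
        rewrite (QN_ext m b c _ (fun x => Cadd (fsub w psi x) (fsub (g n) w x))) in H.
        + eapply Rle_trans; [exact H|]. apply (QN_add_le m b c Hg _ _ t); auto. apply (DN_sub m b c Hg); auto.
        + intros x; unfold g, fsub. destruct (w x), (f x), (phi n x), (psi x); unfold Csub, Cadd, Copp; simpl; f_equal; ring. }
    lra.
Qed.

Lemma row_sum {V} (m : V -> R) b c (Hg : is_graph m b c) w x : in_DN m b c w ->
  nn_summable (fun q => b x q * Cmod2 (Csub (w x) (w q))).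
Proof.
  intros Hw. destruct (DN_parts _ _ _ _ Hw) as [_ [S1 _]].
  apply (nn_bound _ (nnsum (E1 b w))). intros L HL.
  replace (fin_sum (fun q => b x q * Cmod2 (Csub (w x) (w q))) L) with (fin_sum (E1 b w) (map (fun q => (x, q)) L)).
  - apply nnsum_ge; auto. apply NoDup_map_inj; auto. intros y z H; inversion H; auto.
  - rewrite fin_sum_map. reflexivity.
Qed.

Lemma deg_summable {V} (m : V -> R) b c (Hg : is_graph m b c) x : nn_summable (b x).
Proof. apply Hg. Qed.

Lemma abs_le_half r : Rabs r <= (1 + r * r) / 2.
Proof. pose proof (Rle_0_sqr (Rabs r - 1)). pose proof (Rsqr_abs r). unfold Rsqr in *. nra. Qed.

Lemma Cnorm_le_half z : Cnorm z <= (1 + Cmod2 z) / 2.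
Proof. pose proof (Cnorm_sq z); pose proof (Rle_0_sqr (Cnorm z - 1)). unfold Rsqr in *. nra. Qed.

Lemma S_exists {V} (m : V -> R) b c (Hg : is_graph m b c) w x (pr : Cpx -> R) :
  in_DN m b c w -> (forall z, Rabs (pr z) <= (1 + Cmod2 z) / 2) ->
  exists S, R_has_sum (fun q => b x q * pr (Csub (w x) (w q))) S.
Proof.
  intros Hw Hpr.
  destruct (nn_lin (b x) (fun q => b x q * Cmod2 (Csub (w x) (w q))) (/2) (/2) ltac:(lra) ltac:(lra)
     (graph_b_nonneg m b c Hg x) (fun q => Rmult_le_pos _ _ (graph_b_nonneg m b c Hg x q) (Cmod2_nonneg _))
     (deg_summable m b c Hg x) (row_sum m b c Hg w x Hw)) as [S _].
  apply (R_has_sum_dom _ (fun q => / 2 * b x q + / 2 * (b x q * Cmod2 (Csub (w x) (w q))))); auto.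
  intros q. rewrite Rabs_mult. rewrite (Rabs_right (b x q)) by (apply Rle_ge, (graph_b_nonneg m b c Hg)).
  specialize (Hpr (Csub (w x) (w q))). pose proof (graph_b_nonneg m b c Hg x q).
  apply Rle_trans with (b x q * ((1 + Cmod2 (Csub (w x) (w q))) / 2)); [apply Rmult_le_compat_l; auto|lra].
Qed.

Lemma fst_le_half z : Rabs (fst z) <= (1 + Cmod2 z) / 2.
Proof. pose proof (abs_le_half (fst z)). unfold Cmod2, Rsqr. pose proof (Rle_0_sqr (snd z)). unfold Rsqr in *; lra. Qed.
Lemma snd_le_half z : Rabs (snd z) <= (1 + Cmod2 z) / 2.
Proof. pose proof (abs_le_half (snd z)). unfold Cmod2, Rsqr. pose proof (Rle_0_sqr (fst z)). unfold Rsqr in *; lra. Qed.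

Lemma R_has_sum_nn_eq {T} (f : T -> R) s : (forall x, 0 <= f x) -> nn_summable f -> R_has_sum f s -> nnsum f = s.
Proof. intros H0 S H. apply (R_has_sum_unique f); auto. apply R_has_sum_nn; auto. Qed.

Lemma cind_at {V} (x : V) z : cind x z x = z.
Proof. unfold cind. rewrite (decT' (eq_refl x)). auto. Qed.
Lemma cind_off {V} (x y : V) z : y <> x -> cind x z y = C0.
Proof. intros H. unfold cind. rewrite (decF' H). auto. Qed.

Lemma single_fn {V} (x : V) (r : R) (f g : V -> R) : (forall z, z <> x -> f z = g z) ->
  forall z, f z = g z + (if dec (z = x) then f x - g x else 0).
Proof. intros H z. destruct (dec (z = x)) eqn:E. - apply decT in E; subst; ring. - apply decF1 in E. rewrite H; auto; ring. Qed.

Lemma expansion {V} (m : V -> R) b c (Hg : is_graph m b c) w x tau S1 S2 :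
  in_DN m b c w ->
  R_has_sum (fun q => b x q * fst (Csub (w x) (w q))) S1 ->
  R_has_sum (fun q => b x q * snd (Csub (w x) (w q))) S2 ->
  QN_norm2 m b c (fsub w (cind x tau)) = QN_norm2 m b c w
    - 2 * (fst tau * (S1 + (c x + m x) * fst (w x)) + snd tau * (S2 + (c x + m x) * snd (w x)))
    + Cmod2 tau * (nnsum (b x) + c x + m x).
Proof.
  intros Hw HS1 HS2.
  set (w' := fsub w (cind x tau)).
  assert (Hw' : in_DN m b c w') by (apply (DN_sub m b c Hg); auto; apply DN_cind; auto).
  destruct (DN_parts _ _ _ _ Hw) as [A3 [A1 A2]]. destruct (DN_parts _ _ _ _ Hw') as [B3 [B1 B2]].
  assert (Ww : forall z, z <> x -> w' z = w z) by (intros z Hz; unfold w', fsub; rewrite cind_off; auto; apply Csub_C0).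
  assert (Wx : w' x = Csub (w x) tau) by (unfold w', fsub; rewrite cind_at; auto).
  assert (Q3 : nnsum (E3 m w') = nnsum (E3 m w) + (E3 m w' x - E3 m w x)).
  { apply R_has_sum_nn_eq; auto. apply (E3_nonneg m b c Hg).
    apply (R_has_sum_ext (fun z => E3 m w z + (if dec (z = x) then E3 m w' x - E3 m w x else 0))).
    - intros z; symmetry; apply (single_fn x 0); intros; unfold E3; rewrite Ww; auto.
    - apply R_has_sum_plus; [apply R_has_sum_nn; auto; apply (E3_nonneg m b c Hg)|apply R_has_sum_single]. }
  assert (Q2 : nnsum (E2 c w') = nnsum (E2 c w) + (E2 c w' x - E2 c w x)).
  { apply R_has_sum_nn_eq; auto. apply (E2_nonneg m b c Hg).
    apply (R_has_sum_ext (fun z => E2 c w z + (if dec (z = x) then E2 c w' x - E2 c w x else 0))).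
    - intros z; symmetry; apply (single_fn x 0); intros; unfold E2; rewrite Ww; auto.
    - apply R_has_sum_plus; [apply R_has_sum_nn; auto; apply (E2_nonneg m b c Hg)|apply R_has_sum_single]. }
  set (k := fun q => b x q * (Cmod2 (Csub (Csub (w x) tau) (w q)) - Cmod2 (Csub (w x) (w q)))).
  set (Sk := -2 * (fst tau * S1 + snd tau * S2) + Cmod2 tau * nnsum (b x)).
  assert (Hk : R_has_sum k Sk).
  { apply (R_has_sum_ext (fun q => (-2 * fst tau) * (b x q * fst (Csub (w x) (w q)))
        + ((-2 * snd tau) * (b x q * snd (Csub (w x) (w q))) + Cmod2 tau * b x q))).
    - intros q. unfold k. rewrite !Csub_components. destruct tau as [t1 t2]. unfold Cmod2, Rsqr; simpl. ring.
    - unfold Sk. replace (-2 * (fst tau * S1 + snd tau * S2) + Cmod2 tau * nnsum (b x)) with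
        ((-2 * fst tau) * S1 + ((-2 * snd tau) * S2 + Cmod2 tau * nnsum (b x))) by ring.
      apply R_has_sum_plus; [apply R_has_sum_scal; auto|]. apply R_has_sum_plus; [apply R_has_sum_scal; auto|].
      apply R_has_sum_scal. apply R_has_sum_nn; [apply (graph_b_nonneg m b c Hg)|apply deg_summable with m c; auto]. }
  assert (Hk1 : R_has_sum (fun p : V * V => ind (fst p = x) * k (snd p)) Sk).
  { apply (R_has_sum_reindex _ (fun q => (x, q)) snd (fun p => fst p = x)); simpl; auto.
    - intros [p1 p2]; simpl; intros ->; auto.
    - intros p Hp. unfold ind. rewrite (decF' Hp). ring.
    - eapply R_has_sum_ext; [|exact Hk]. intros q. unfold ind. rewrite (decT' (eq_refl x)). ring. }
  assert (Hk2 : R_has_sum (fun p : V * V => ind (snd p = x) * k (fst p)) Sk).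
  { apply (R_has_sum_reindex _ (fun q => (q, x)) fst (fun p => snd p = x)); simpl; auto.
    - intros [p1 p2]; simpl; intros ->; auto.
    - intros p Hp. unfold ind. rewrite (decF' Hp). ring.
    - eapply R_has_sum_ext; [|exact Hk]. intros q. unfold ind. rewrite (decT' (eq_refl x)). ring. }
  assert (Q1 : nnsum (E1 b w') = nnsum (E1 b w) + (Sk + Sk)).
  { apply R_has_sum_nn_eq; auto. apply (E1_nonneg m b c Hg).
    apply (R_has_sum_ext (fun p => E1 b w p + (ind (fst p = x) * k (snd p) + ind (snd p = x) * k (fst p)))).
    - intros [p1 p2]. unfold E1, k, ind; simpl.
      destruct (dec (p1 = x)) eqn:E1'; destruct (dec (p2 = x)) eqn:E2'.
      + apply decT in E1'; apply decT in E2'; subst. rewrite !(graph_b_diag m b c Hg). ring.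
      + apply decT in E1'; apply decF1 in E2'; subst. rewrite Wx, (Ww p2); auto. ring.
      + apply decF1 in E1'; apply decT in E2'; subst. rewrite Wx, (Ww p1); auto.
        rewrite (graph_b_sym m b c Hg p1 x), (Cmod2_sub_sym (w p1)), (Cmod2_sub_sym (w p1)). ring.
      + apply decF1 in E1'; apply decF1 in E2'. rewrite (Ww p1), (Ww p2); auto. ring.
    - apply R_has_sum_plus; [apply R_has_sum_nn; auto; apply (E1_nonneg m b c Hg)|]. apply R_has_sum_plus; auto. }
  rewrite !QN_norm2_eq. fold w'. rewrite Q1, Q2, Q3. unfold E2, E3, Sk. rewrite Wx.
  rewrite !Csub_components. destruct tau as [t1 t2]. destruct (w x) as [w1 w2]. unfold Cmod2, Rsqr; simpl. field.
Qed.

Lemma quad_zero A K : 0 <= K -> (forall e, 0 <= - 2 * (e * A) + (e * e) * K) -> A = 0.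
Proof.
  intros HK H. specialize (H (A / (K + 1))).
  replace (- 2 * (A / (K + 1) * A) + (A / (K + 1) * (A / (K + 1))) * K) with (- (A * A) * (K + 2) / ((K + 1) * (K + 1))) in H
    by (field; lra).
  assert (0 < (K + 1) * (K + 1)) by nra.
  assert (0 <= - (A * A) * (K + 2)).
  { apply (Rmult_le_reg_r (/ ((K + 1) * (K + 1)))); [apply Rinv_0_lt_compat; auto|]. rewrite Rmult_0_l. exact H. }
  nra.
Qed.

Lemma Ftilde_DN {V} (m : V -> R) b c (Hg : is_graph m b c) w : in_DN m b c w -> in_Ftilde b w.
Proof.
  intros Hw x.
  destruct (nn_lin (b x) (fun q => b x q * Cmod2 (Csub (w x) (w q))) (Cnorm (w x) + / 2) (/2)
     ltac:(pose proof (Cnorm_nonneg (w x)); lra) ltac:(lra)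
     (graph_b_nonneg m b c Hg x) (fun q => Rmult_le_pos _ _ (graph_b_nonneg m b c Hg x q) (Cmod2_nonneg _))
     (deg_summable m b c Hg x) (row_sum m b c Hg w x Hw)) as [S _].
  apply (nn_summable_mono _ _ S). intros y. pose proof (graph_b_nonneg m b c Hg x y).
  pose proof (Cnorm_sub_triang (w y) (w x) C0). rewrite !Cnorm_Csub_C0, Cnorm_sub_sym in H0.
  pose proof (Cnorm_le_half (Csub (w x) (w y))).
  apply Rle_trans with (b x y * (Cnorm (w x) + (1 + Cmod2 (Csub (w x) (w y))) / 2)); [apply Rmult_le_compat_l; lra|lra].
Qed.

Lemma harmonic_eq {V} (m : V -> R) b c (Hg : is_graph m b c) w : in_DN m b c w ->
  (forall psi, fin_supp psi -> QN_norm2 m b c w <= QN_norm2 m b c (fsub w psi)) -> Lt_plus_one_zero m b c w.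
Proof.
  intros Hw Hmin. split; [apply (Ftilde_DN m b c Hg); auto|]. intros x.
  destruct (S_exists m b c Hg w x fst Hw fst_le_half) as [S1 HS1].
  destruct (S_exists m b c Hg w x snd Hw snd_le_half) as [S2 HS2].
  assert (HK : 0 <= nnsum (b x) + c x + m x).
  { pose proof (nnsum_nonneg _ (deg_summable m b c Hg x)). pose proof (graph_c_nonneg m b c Hg x).
    pose proof (graph_m_pos m b c Hg x). lra. }
  assert (Hfs : forall tau, fin_supp (cind x tau)).
  { intros tau. exists [x]. intros y Hy. apply cind_off. intros ->; apply Hy; left; auto. }
  assert (A1 : S1 + (c x + m x) * fst (w x) = 0).
  { apply (quad_zero _ _ HK). intros e. pose proof (Hmin _ (Hfs (e, 0))).
    rewrite (expansion m b c Hg w x (e, 0) S1 S2 Hw HS1 HS2) in H. unfold Cmod2, Rsqr in H; simpl in H. lra. }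
  assert (A2 : S2 + (c x + m x) * snd (w x) = 0).
  { apply (quad_zero _ _ HK). intros e. pose proof (Hmin _ (Hfs (0, e))).
    rewrite (expansion m b c Hg w x (0, e) S1 S2 Hw HS1 HS2) in H. unfold Cmod2, Rsqr in H; simpl in H. lra. }
  exists (S1, S2). split.
  - apply C_has_sum_of_R.
    + eapply R_has_sum_ext; [|exact HS1]. intros y. unfold Cmul, RtoC; simpl. ring.
    + eapply R_has_sum_ext; [|exact HS2]. intros y. unfold Cmul, RtoC; simpl. ring.
  - pose proof (graph_m_pos m b c Hg x). destruct (w x) as [w1 w2]. simpl in A1, A2.
    unfold Cadd, Cmul, RtoC, C0; simpl. f_equal.
    + replace S1 with (- ((c x + m x) * w1)) by lra. field; lra.
    + replace S2 with (- ((c x + m x) * w2)) by lra. field; lra.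
Qed.

Lemma part5 {V} (m : V -> R) b c (Hg : is_graph m b c) (Hc : connected b) :
  forall f, in_DN m b c f -> exists w, in_DN m b c w /\ Lt_plus_one_zero m b c w /\
     forall s, Vinf_pt b s -> bval w s = bval f s.
Proof.
  intros f Hf. destruct (minimizer m b c Hg Hc f Hf) as [w [Hw [HD Hmin]]].
  exists w. split; auto. split; [apply (harmonic_eq m b c Hg); auto|].
  intros s Hs. apply (C_cv_unique (fun n => w (s n))); [apply (bval_spec m b c Hg Hc); auto; apply Hs|].
  pose proof (C_cv_lin _ _ _ _ (1, 0) (1, 0) (part1 m b c Hg Hc _ HD s Hs) (bval_spec m b c Hg Hc f s Hf (proj1 Hs))) as H.
  replace (bval f s) with (Cadd (Cmul (1, 0) C0) (Cmul (1, 0) (bval f s)))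
    by (destruct (bval f s); unfold Cadd, Cmul, C0; simpl; f_equal; ring).
  eapply C_cv_ext; [|exact H]. intros n; cbv beta. unfold fsub. destruct (w (s n)), (f (s n)).
  unfold Cadd, Cmul, Csub, Copp; simpl; f_equal; ring.
Qed.

Theorem mainTheorem11 (V : Type) (m : V -> R) (b : V -> V -> R) (c : V -> R)
  (HV : countable_set V) (Hg : is_graph m b c) (Hconn : connected b) :
  (forall u, in_DD m b c u -> forall s, Vinf_pt b s -> C_cv (fun n => u (s n)) C0)
  /\
  (forall (u v : V -> Cpx) (al be : Cpx), in_DN m b c u -> in_DN m b c v ->
     forall s, Vinf_pt b s ->
       bval (fun x => Cadd (Cmul al (u x)) (Cmul be (v x))) s
       = Cadd (Cmul al (bval u s)) (Cmul be (bval v s)))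
  /\
  (forall (un : nat -> V -> Cpx) (u : V -> Cpx),
     (forall n, in_DN m b c (un n)) -> in_DN m b c u ->
     (exists wn : nat -> V -> Cpx, (forall n, in_DD m b c (wn n)) /\
        Un_cv (fun n => QN_norm2 m b c (fsub (fsub (un n) u) (wn n))) 0) ->
     forall s, Vinf_pt b s -> exists r, r > 0 /\
       forall eps, eps > 0 -> exists N, forall n, (N <= n)%nat ->
         forall t, Vinf_pt b t -> dhat b s t < r ->
           Cnorm (Csub (bval (un n) t) (bval u t)) <= eps)
  /\
  (forall g : (nat -> V) -> Cpx,
     (exists f, in_DN m b c f /\ forall s, Vinf_pt b s -> g s = bval f s) ->
     exists u, in_DN m b c u /\ forall s, Vinf_pt b s -> bval u s = g s)
  /\
  (forall f, in_DN m b c f -> exists w, in_DN m b c w /\ Lt_plus_one_zero m b c w /\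
     forall s, Vinf_pt b s -> bval w s = bval f s)
  /\
  (Vhat_compact b ->
     forall u v, in_DN m b c u -> in_DN m b c v ->
       (forall s, Vinf_pt b s -> bval u s = bval v s) -> in_DD m b c (fsub u v)).
Proof.
  split; [apply (part1 m b c Hg Hconn)|].
  split; [apply (part2 m b c Hg Hconn)|].
  split; [apply (part3 m b c Hg Hconn)|].
  split; [intros g [f [Hf Hgf]]; exists f; split; auto; intros s Hs; rewrite Hgf; auto|].
  split; [apply (part5 m b c Hg Hconn)|].
  apply (part6 m b c Hg Hconn).
Qed.
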